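(* Let the data $\{Y_{ij}\}$, the true parameters $(\boldsymbol\nu^*,\mathbf B^* )$, the MLE $(\hat{\boldsymbol\nu},\hat{\mathbf B})$, the posterior weights $\hat\gamma_{ik}$, the pseudo-likelihoods $Q_j$, the candidate solutions $\tilde{\boldsymbol\beta}_j^{(m)}$, $m=1,\dots,K$, and the selected level $\tilde m_j$ be as described in the context, with $J$ and $K$ fixed and $N\to\infty$. Suppose that the following assumptions hold: (A1) (root-$N$ consistency of the MLE) $\|\hat{\boldsymbol\nu}-\boldsymbol\nu^*\|=O_p(N^{-1/2})$ and $\|\hat{\mathbf B}-\mathbf B^*\|_F=O_p(N^{-1/2})$, where $\|\cdot\|$ is the Euclidean norm and $\|\cdot\|_F$ the Frobenius norm, and the class labels of the MLE are aligned with the true labels; (A2) (interior) $0<\beta^*_{jk}<1$ and $\nu^*_k>0$ for all $j=1,\dots,J$ and $k=1,\dots,K$; (A3) the EBIC constant $\rho\ge 1$ does not depend on $N$. Then for each item $j=1,\dots,J$, $P(\tilde m_j=m_j^* )\to 1$ as $N\to\infty$, where $m_j^*$ is the number of distinct values among $\beta^*_{j1},\dots,\beta^*_{jK}$. Moreover, writing $\tilde{\boldsymbol\beta}_j^{(\tilde m_j)}=(\tilde\beta_{j1},\dots,\tilde\beta_{jK})^\top$ for the refined estimator of item $j$, as $N\to\infty$: 1. $P(\tilde\beta_{jg}=\tilde\beta_{jh})\to 1$ for all $g,h\in\{1,\dots,K\}$ with $\beta^*_{jg}=\beta^*_{jh}$; 2. $P(\tilde\beta_{jg}\neq\tilde\beta_{jh})\to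 1$ for all $g,h\in\{1,\dots,K\}$ with $\beta^*_{jg}\neq\beta^*_{jh}$.
   Context: Latent class model: $N$ respondents answer $J$ binary items, $Y_{ij}\in\{0,1\}$. Latent classes $\xi_1,\dots,\xi_N\in\{1,\dots,K\}$ are i.i.d. with $P(\xi_i=k)=\nu_k$ ($\nu_k\ge 0$, $\sum_k\nu_k=1$), $P(Y_{ij}=1\mid\xi_i=k)=\beta_{jk}$, and $Y_{i1},\dots,Y_{iJ}$ are conditionally independent given $\xi_i$ (local independence). Write $\boldsymbol\nu=(\nu_1,\dots,\nu_K)^\top$, $\mathbf B=(\beta_{jk})_{J\times K}$, $\boldsymbol\beta_j=(\beta_{j1},\dots,\beta_{jK})^\top$; the data are generated from true values $\boldsymbol\nu^*,\mathbf B^*$ with $K$ known. The marginal log-likelihood is $l(\boldsymbol\nu,\mathbf B)=\sum_{i=1}^N\log\big(\sum_{k=1}^K\nu_k\prod_{j=1}^J\beta_{jk}^{Y_{ij}}(1-\beta_{jk})^{1-Y_{ij}}\big)$ and $(\hat{\boldsymbol\nu},\hat{\mathbf B})$ is its maximizer (the MLE). For a vector $\mathbf v$, $\mathrm{card}(\mathbf v)$ denotes the number of distinct entries. Posterior weights: $\hat\gamma_{ik}=\dfrac{\hat\nu_k\prod_{j}\hat\beta_{jk}^{Y_{ij}}(1-\hat\beta_{jk})^{1-Y_{ij}}}{\sum_{h=1}^K\hat\nu_h\prod_{j}\hat\beta_{jh}^{Y_{ij}}(1-\hat\beta_{jh})^{1-Y_{ij}}}$, $\hat{\mathbf\Gamma}=(\hat\gamma_{ik})_{N\times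 K}$. Item-specific pseudo-likelihood: $Q_j(\boldsymbol\beta_j;\hat{\mathbf\Gamma})=\sum_{i=1}^N\sum_{k=1}^K\hat\gamma_{ik}\big(Y_{ij}\log\beta_{jk}+(1-Y_{ij})\log(1-\beta_{jk})\big)$. For an ordered partition $\mathcal C=(C_1,\dots,C_m)$ of $\{1,\dots,K\}$ into nonempty disjoint blocks, the constrained solution is the maximizer of $Q_j(\cdot;\hat{\mathbf\Gamma})$ over $\boldsymbol\beta_j$ that are constant on each block (the paper writes this as maximization over $\Theta_j(\mathcal C)=\{\boldsymbol\beta_j:\beta_{jk}=\beta_{jk'}\ \forall k,k'\in C_l;\ \beta_{jk}<\beta_{jk'}$ if $k\in C_l,k'\in C_{l'},l<l'\}$); for $k\in C_l$ it equals $\sum_i\sum_{k'\in C_l}\hat\gamma_{ik'}Y_{ij}\big/\sum_i\sum_{k'\in C_l}\hat\gamma_{ik'}$. Stepwise search (for each item $j$): let $\pi_j$ be a permutation with $\hat\beta_{j,\pi_j(1)}<\cdots<\hat\beta_{j,\pi_j(K)}$ (the entries of $\hat{\boldsymbol\beta}_j$ are assumed distinct, which holds with probability tending to one; ties broken arbitrarily otherwise). Set $\tilde{\boldsymbol\beta}_j^{(K)}=\hat{\boldsymbol\beta}_j$ and $\mathcal C_j^{(K)}=(\{\pi_j(1)\},\dots,\{\pi_j(K)\})$. For $s=K,K-1,\dots,2$: given $\mathcal C_j^{(s)}=(C_{j1}^{(s)},\dots,C_{js}^{(s)})$, for $b=1,\dots,s-1$ form $\mathcal C_{jb}^{(s-1)}$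 by merging the adjacent blocks $C_{jb}^{(s)}$ and $C_{j,b+1}^{(s)}$ (keeping the order of the others), and let $\tilde{\boldsymbol\beta}_{jb}^{(s-1)}$ be the constrained solution for $\mathcal C_{jb}^{(s-1)}$; choose $b_j^{(s-1)}=\arg\max_b Q_j(\tilde{\boldsymbol\beta}_{jb}^{(s-1)};\hat{\mathbf\Gamma})$ and set $\tilde{\boldsymbol\beta}_j^{(s-1)}=\tilde{\boldsymbol\beta}_{jb_j^{(s-1)}}^{(s-1)}$, $\mathcal C_j^{(s-1)}=\mathcal C_{jb_j^{(s-1)}}^{(s-1)}$. This yields candidates $\tilde{\boldsymbol\beta}_j^{(1)},\dots,\tilde{\boldsymbol\beta}_j^{(K)}$. Extended BIC: $\mathrm{EBIC}_j(m)=-2Q_j(\tilde{\boldsymbol\beta}_j^{(m)};\hat{\mathbf\Gamma})+m\log N+2m\log\rho$ with a constant $\rho\ge 1$, and $\tilde m_j=\arg\min_{1\le m\le K}\mathrm{EBIC}_j(m)$. The refined estimator for item $j$ is $\tilde{\boldsymbol\beta}_j^{(\tilde m_j)}$. *)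

(* Defs.v *)
From HB Require Import structures.
From mathcomp Require Import all_boot all_order all_algebra.
From mathcomp Require Import all_classical all_reals all_analysis.
Set Implicit Arguments. Unset Strict Implicit. Unset Printing Implicit Defensive.
Import Order.TTheory GRing.Theory Num.Theory.
Import numFieldNormedType.Exports.
Local Open Scope ring_scope.

Section LCM.
Variable R : realType.

Definition data (N J : nat) := {ffun 'I_N * 'I_J -> bool}.

Definition yv N J (Y : data N J) (i : 'I_N) (j : 'I_J) : R := (Y (i, j))%:R.

Definition bern (b : R) (y : bool) : R := if y then b else 1 - b.

Definition elog (x : R) : \bar R := if 0 < x then (ln x)%:E else -oo%E.

(* c * log x, with the convention 0 * log 0 = 0 (c >= 0). *)
Definition xlog (c x : R) : \bar R := if c == 0 then 0%E else (c%:E * elog x)%E.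

Definition classlik N J K (B : 'I_J -> 'I_K -> R) (Y : data N J) (i : 'I_N) (k : 'I_K)
  : R := \prod_(j < J) bern (B j k) (Y (i, j)).

Definition loglik N J K (nu : 'I_K -> R) (B : 'I_J -> 'I_K -> R) (Y : data N J)
  : \bar R := (\sum_(i < N) elog (\sum_(k < K) nu k * classlik B Y i k))%E.

Definition in_simplex K (nu : 'I_K -> R) : Prop :=
  (forall k, 0 <= nu k) /\ \sum_(k < K) nu k = 1.
Definition in_unit J K (B : 'I_J -> 'I_K -> R) : Prop :=
  forall j k, 0 <= B j k <= 1.

Definition is_MLE N J K (nu : 'I_K -> R) (B : 'I_J -> 'I_K -> R) (Y : data N J)
  : Prop :=
  [/\ in_simplex nu, in_unit B &
      forall (nu' : 'I_K -> R) (B' : 'I_J -> 'I_K -> R), in_simplex nu' -> in_unit B' ->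
        (loglik nu' B' Y <= loglik nu B Y)%E].

Definition gamma N J K (nu : 'I_K -> R) (B : 'I_J -> 'I_K -> R) (Y : data N J)
  (i : 'I_N) (k : 'I_K) : R :=
  nu k * classlik B Y i k / \sum_(h < K) nu h * classlik B Y i h.

Definition Qj N J K (gam : 'I_N -> 'I_K -> R) (Y : data N J) (j : 'I_J)
  (beta : 'I_K -> R) : \bar R :=
  (\sum_(i < N) \sum_(k < K)
     (xlog (gam i k * yv Y i j) (beta k) +
      xlog (gam i k * (1 - yv Y i j)) (1 - beta k)))%E.

(* Ordered partitions of {1..K}: sequences of blocks. *)
Definition block K (C : seq (seq 'I_K)) (k : 'I_K) : seq 'I_K :=
  nth [::] C (find (fun c : seq 'I_K => k \in c) C).

(* Constrained solution for the ordered partition C (closed form). *)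
Definition csol N J K (gam : 'I_N -> 'I_K -> R) (Y : data N J) (j : 'I_J)
  (C : seq (seq 'I_K)) (k : 'I_K) : R :=
  (\sum_(i < N) \sum_(k' <- block C k) gam i k' * yv Y i j) /
  (\sum_(i < N) \sum_(k' <- block C k) gam i k').

Definition merge_at (T : Type) (b : nat) (C : seq (seq T)) : seq (seq T) :=
  take b C ++ (nth [::] C b ++ nth [::] C b.+1) :: drop b.+2 C.

(* First maximizer / minimizer of f over {0, ..., n-1} (ties -> smallest index). *)
Definition first_argmax (f : nat -> \bar R) (n : nat) : nat :=
  foldl (fun best b => if (f best < f b)%E then b else best) 0 (iota 1 n.-1).
Definition first_argmin (f : nat -> \bar R) (n : nat) : nat :=
  foldl (fun best b => if (f b < f best)%E then b else best) 0 (iota 1 n.-1).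

Section Search.
Variables (N J K : nat) (hnu : 'I_K -> R) (hB : 'I_J -> 'I_K -> R)
  (Y : data N J) (j : 'I_J).

Definition hgam := gamma hnu hB Y.

Definition part_init : seq (seq 'I_K) :=
  [seq [:: k] | k <- sort (fun a b : 'I_K => hB j a <= hB j b) (enum 'I_K)].

Definition part_step (C : seq (seq 'I_K)) : seq (seq 'I_K) :=
  merge_at (first_argmax (fun b => Qj hgam Y j (csol hgam Y j (merge_at b C)))
                         (size C).-1) C.

(* C^(K - t) *)
Definition parts (t : nat) : seq (seq 'I_K) := iter t part_step part_init.

Definition cand (m : nat) : 'I_K -> R :=
  if m == K then hB j else csol hgam Y j (parts (K - m)).

Definition EBIC (rho : R) (m : nat) : \bar R :=
  (- (2%:E * Qj hgam Y j (cand m)) +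
   (m%:R * ln (N%:R : R) + 2 * m%:R * ln rho)%:E)%E.

Definition mtilde (rho : R) : nat := (first_argmin (fun t => EBIC rho t.+1) K).+1.

Definition refined (rho : R) : 'I_K -> R := cand (mtilde rho).
End Search.

Definition card_distinct K (beta : 'I_K -> R) : nat :=
  size (undup [seq beta k | k <- enum 'I_K]).

(* Probability of an event on the data under the latent class model with
   parameters (nu, B): joint law of (xi_1..xi_N, Y) summed over the event. *)
Definition prob N J K (nu : 'I_K -> R) (B : 'I_J -> 'I_K -> R)
  (E : pred (data N J)) : R :=
  \sum_(w : {ffun 'I_N -> 'I_K} * data N J | E w.2)
     \prod_(i < N) (nu (w.1 i) * \prod_(j < J) bern (B j (w.1 i)) (w.2 (i, j))).

Definition Op_root_N J K (nu : 'I_K -> R) (B : 'I_J -> 'I_K -> R)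
  (X : forall N, data N J -> R) : Prop :=
  forall eps : R, 0 < eps -> exists M : R, exists N0 : nat, forall N : nat,
    (N0 <= N)%N ->
    prob nu B (fun Y : data N J => M < Num.sqrt (N%:R) * `|X N Y|) < eps.

Definition vnorm K (v : 'I_K -> R) : R := Num.sqrt (\sum_(k < K) v k ^+ 2).
Definition frob J K (A : 'I_J -> 'I_K -> R) : R :=
  Num.sqrt (\sum_(j < J) \sum_(k < K) A j k ^+ 2).

End LCM.

(* Main.v *)
Require Import Defs.
From HB Require Import structures.
From mathcomp Require Import all_boot all_order all_algebra.
From mathcomp Require Import all_classical all_reals all_analysis.
From mathcomp Require Import ring lra.
Import Order.TTheory GRing.Theory Num.Theory.
Import numFieldNormedType.Exports.
Local Open Scope classical_set_scope.
Local Open Scope ring_scope.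
Set Implicit Arguments. Unset Strict Implicit. Unset Printing Implicit Defensive.

Section RealLemmas.
Variable R : realType.
Implicit Types a b t x z : R.

Lemma ln_le_sub1 t : 0 < t -> ln t <= t - 1.
Proof.
move=> t0; have := @le_ln1Dx R (t - 1).
have -> : 1 + (t - 1) = t by ring.
by apply; lra.
Qed.

Lemma ln_ge_1subV t : 0 < t -> 1 - t^-1 <= ln t.
Proof.
move=> t0; have it0 : 0 < t^-1 by rewrite invr_gt0.
have := ln_le_sub1 it0; rewrite lnV ?posrE //; lra.
Qed.

Lemma ln1Dx_ge z : -(1/2) <= z -> z - 2 * z ^+ 2 <= ln (1 + z).
Proof.
move=> hz; have h1 : 0 < 1 + z by lra.
apply: le_trans (ln_ge_1subV h1).
have -> : 1 - (1 + z)^-1 = z / (1 + z) by field; lra.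
rewrite ler_pdivlMr //; nra.
Qed.

Definition kl a b := a * (ln a - ln b) + (1 - a) * (ln (1 - a) - ln (1 - b)).

Lemma kl_ub a b : 0 < a < 1 -> 0 < b < 1 -> kl a b <= (a - b) ^+ 2 / (b * (1 - b)).
Proof.
move=> /andP[a0 a1] /andP[b0 b1].
have h1 : ln a - ln b <= a / b - 1.
  rewrite -ln_div ?posrE //; apply: ln_le_sub1; exact: divr_gt0.
have h2 : ln (1 - a) - ln (1 - b) <= (1 - a) / (1 - b) - 1.
  rewrite -ln_div ?posrE ?subr_gt0 //; apply: ln_le_sub1; apply: divr_gt0; lra.
have -> : (a - b) ^+ 2 / (b * (1 - b)) = a * (a / b - 1) + (1 - a) * ((1 - a) / (1 - b) - 1).
  by field; apply/andP; split; lra.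
rewrite /kl; apply: lerD; apply: ler_wpM2l => //; lra.
Qed.

Lemma kl_lb a b : 0 < a < 1 -> 0 < b < 1 -> (a - b) ^+ 2 / 4 <= kl a b.
Proof.
move=> /andP[a0 a1] /andP[b0 b1].
set x := Num.sqrt a; set y := Num.sqrt b.
set u := Num.sqrt (1 - a); set w := Num.sqrt (1 - b).
have x0 : 0 < x by rewrite sqrtr_gt0.
have y0 : 0 < y by rewrite sqrtr_gt0.
have u0 : 0 < u by rewrite sqrtr_gt0 subr_gt0.
have w0 : 0 < w by rewrite sqrtr_gt0 subr_gt0.
have xx : x ^+ 2 = a by rewrite sqr_sqrtr //; lra.
have yy : y ^+ 2 = b by rewrite sqr_sqrtr //; lra.
have uu : u ^+ 2 = 1 - a by rewrite sqr_sqrtr //; lra.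
have ww : w ^+ 2 = 1 - b by rewrite sqr_sqrtr //; lra.
have key : forall p q : R, 0 < p -> 0 < q ->
    p ^+ 2 * (ln (p ^+ 2) - ln (q ^+ 2)) >= 2 * (p ^+ 2 - p * q).
  move=> p q p0 q0.
  rewrite !lnXn // -mulrnBl -ln_div ?posrE //.
  have := ln_ge_1subV (divr_gt0 p0 q0).
  rewrite invf_div => h.
  have -> : 2 * (p ^+ 2 - p * q) = p ^+ 2 * ((1 - q / p) *+ 2).
    by rewrite mulr2n; field; lra.
  apply: ler_wpM2l; first exact: sqr_ge0.
  by rewrite !mulr2n lerD.
have k1 := key x y x0 y0; have k2 := key u w u0 w0.
rewrite xx yy in k1; rewrite uu ww in k2.
rewrite /kl.
have e1 : (a - b) ^+ 2 = (x - y) ^+ 2 * (x + y) ^+ 2 by rewrite -xx -yy; ring.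
have xl1 : x <= 1 by rewrite -sqrtr1 ler_sqrt //; lra.
have yl1 : y <= 1 by rewrite -sqrtr1 ler_sqrt //; lra.
have hxy : (x + y) ^+ 2 <= 4.
  have h0 : 0 <= x + y by lra.
  have h2 : x + y <= 2 by lra.
  rewrite expr2; nra.
have h3 : (a - b) ^+ 2 / 4 <= (x - y) ^+ 2.
  rewrite e1 ler_pdivrMr //; apply: ler_wpM2l => //; exact: sqr_ge0.
apply: (le_trans h3).
have e2 : (x - y) ^+ 2 = a + b - 2 * (x * y) by rewrite -xx -yy; ring.
have e3 : 2 * (u * w) <= (1 - a) + (1 - b).
  rewrite -uu -ww; have := sqr_ge0 (u - w); rewrite !expr2; nra.
rewrite e2; move: k1 k2; set L1 := a * _; set L2 := (1 - a) * _; move=> k1 k2.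
lra.
Qed.

Lemma kl_ge0 a b : 0 < a < 1 -> 0 < b < 1 -> 0 <= kl a b.
Proof.
move=> ha hb; apply: le_trans (kl_lb ha hb); apply: divr_ge0 => //; exact: sqr_ge0.
Qed.

Lemma prod_small (I : finType) (P : pred I) (F : I -> R) (i0 : I) :
  (forall i, P i -> 0 < F i <= 1) -> P i0 ->
  0 < \prod_(i | P i) F i <= F i0.
Proof.
move=> hF Pi0; apply/andP; split.
  by apply: prodr_gt0 => i /hF /andP[].
rewrite (bigD1 i0) //=.
have /andP[f0 f1] := hF i0 Pi0.
apply: ler_piMr; first exact: ltW.
apply: prodr_ile1 => i /andP[Pi _]; have /andP[g0 g1] := hF i Pi; rewrite g1 ltW //.
Qed.

Lemma foc (D E mu : R) : 0 < mu -> mu <= 1 -> 0 <= E ->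
  (forall h, `|h| <= mu -> h * D <= 2 * h ^+ 2 * E) -> D = 0.
Proof.
move=> mu0 mu1 E0 H; apply/eqP; apply/negPn/negP => D0.
have aD : 0 < `|D| by rewrite normr_gt0.
set eta := mu / ((`|D| + 1) * (2 * E + 1)).
have den0 : 0 < (`|D| + 1) * (2 * E + 1) by apply: mulr_gt0; lra.
have eta0 : 0 < eta by apply: divr_gt0.
have hh : `|eta * D| <= mu.
  rewrite normrM (gtr0_norm eta0) /eta mulrAC ler_pdivrMr //.
  rewrite ler_pM2l //; nra.
have := H _ hh.
have DD : 0 < D * D by rewrite -expr2 -real_normK ?num_real // exprn_gt0.
have -> : eta * D * D = eta * (D * D) by ring.
have -> : 2 * (eta * D) ^+ 2 * E = eta * (D * D) * (2 * eta * E) by ring.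
move=> h1.
have h2 : 1 <= 2 * eta * E.
  by rewrite -(ler_pM2l (mulr_gt0 eta0 DD)) mulr1.
have h3 : 2 * eta * E < 1.
  rewrite /eta; have -> : 2 * (mu / ((`|D| + 1) * (2 * E + 1))) * E =
     (2 * mu * E) / ((`|D| + 1) * (2 * E + 1)) by field; lra.
  rewrite ltr_pdivrMr //; nra.
lra.
Qed.

End RealLemmas.

Section ArgLemmas.
Variable R : realType.
Local Open Scope ereal_scope.

Lemma foldl_max (f : nat -> \bar R) b0 l :
  let r := foldl (fun best b => if f best < f b then b else best) b0 l in
  r \in b0 :: l /\ forall t, t \in b0 :: l -> f t <= f r.
Proof.
elim: l b0 => [|x l IH] b0 /=.
  by split; [rewrite inE | move=> t; rewrite inE => /eqP->].
set b1 := if f b0 < f x then x else b0.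
have [Hm Hf] := IH b1.
have hb0 : f b0 <= f b1 by rewrite /b1; case: ifP => // h; exact: ltW.
have hx : f x <= f b1 by rewrite /b1; case: ifP => // /negbT; rewrite -leNgt.
split.
  move: Hm; rewrite !inE => /orP[/eqP->|->]; last by rewrite !orbT.
  by rewrite /b1; case: ifP => _; rewrite eqxx ?orbT.
move=> t; rewrite !inE => /orP[/eqP->|/orP[/eqP->|tl]].
- exact: le_trans hb0 (Hf _ (mem_head _ _)).
- exact: le_trans hx (Hf _ (mem_head _ _)).
- by apply: Hf; rewrite inE tl orbT.
Qed.

Lemma foldl_min (f : nat -> \bar R) b0 l :
  let r := foldl (fun best b => if f b < f best then b else best) b0 l in
  r \in b0 :: l /\ forall t, t \in b0 :: l -> f r <= f t.
Proof.
elim: l b0 => [|x l IH] b0 /=.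
  by split; [rewrite inE | move=> t; rewrite inE => /eqP->].
set b1 := if f x < f b0 then x else b0.
have [Hm Hf] := IH b1.
have hb0 : f b1 <= f b0 by rewrite /b1; case: ifP => // h; exact: ltW.
have hx : f b1 <= f x by rewrite /b1; case: ifP => // /negbT; rewrite -leNgt.
split.
  move: Hm; rewrite !inE => /orP[/eqP->|->]; last by rewrite !orbT.
  by rewrite /b1; case: ifP => _; rewrite eqxx ?orbT.
move=> t; rewrite !inE => /orP[/eqP->|/orP[/eqP->|tl]].
- exact: le_trans (Hf _ (mem_head _ _)) hb0.
- exact: le_trans (Hf _ (mem_head _ _)) hx.
- by apply: Hf; rewrite inE tl orbT.
Qed.

Lemma iota0n n : (0 < n)%N -> 0%N :: iota 1 n.-1 = iota 0 n.
Proof. by case: n. Qed.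

Lemma first_argmax_spec (f : nat -> \bar R) n : (0 < n)%N ->
  (first_argmax f n < n)%N /\ forall t, (t < n)%N -> f t <= f (first_argmax f n).
Proof.
move=> n0; have [Hm Hf] := foldl_max f 0 (iota 1 n.-1).
rewrite /first_argmax; rewrite iota0n // in Hm Hf.
split; first by move: Hm; rewrite mem_iota add0n.
by move=> t tn; apply: Hf; rewrite mem_iota add0n.
Qed.

Lemma first_argmin_spec (f : nat -> \bar R) n : (0 < n)%N ->
  (first_argmin f n < n)%N /\ forall t, (t < n)%N -> f (first_argmin f n) <= f t.
Proof.
move=> n0; have [Hm Hf] := foldl_min f 0 (iota 1 n.-1).
rewrite /first_argmin; rewrite iota0n // in Hm Hf.
split; first by move: Hm; rewrite mem_iota add0n.
by move=> t tn; apply: Hf; rewrite mem_iota add0n.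
Qed.

Lemma first_argmin_unique (f : nat -> \bar R) n t0 : (t0 < n)%N ->
  (forall t, (t < n)%N -> t != t0 -> f t0 < f t) -> first_argmin f n = t0.
Proof.
move=> t0n H; have n0 : (0 < n)%N by apply: leq_ltn_trans t0n.
have [rn Hr] := first_argmin_spec f n0.
apply/eqP; apply/negPn/negP => ne.
have := Hr t0 t0n; rewrite leNgt; by rewrite H.
Qed.

End ArgLemmas.

Section Partitions.
Variable K : nat.
Implicit Types C : seq (seq 'I_K).

Lemma block_mem C (k : 'I_K) : k \in flatten C ->
  block C k \in C /\ k \in block C k.
Proof.
move=> /flattenP[X XC kX].
have hC : has (fun c : seq 'I_K => k \in c) C by apply/hasP; exists X.
split; first by rewrite /block mem_nth // -has_find.
by rewrite /block; exact: (nth_find [::] hC).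
Qed.

Lemma block_eq C (X : seq 'I_K) (k : 'I_K) : uniq (flatten C) ->
  X \in C -> k \in X -> block C k = X.
Proof.
elim: C => [|X0 C IH] //= U.
rewrite cat_uniq in U; case/and3P: U => U0 D U1.
rewrite inE /block /= => /orP[/eqP->|XC] kX.
  by rewrite kX.
case: ifP => kX0.
  exfalso; have kC : k \in flatten C by apply/flattenP; exists X.
  by move/hasPn: D => /(_ k kC); rewrite /= kX0.
exact: IH.
Qed.

Lemma merge_split C b : (b.+1 < size C)%N ->
  C = take b C ++ nth [::] C b :: nth [::] C b.+1 :: drop b.+2 C.
Proof.
move=> hb.
rewrite -{1}(cat_take_drop b C); congr (_ ++ _).
rewrite (drop_nth [::]); last by apply: ltn_trans hb.
by rewrite (drop_nth [::]).
Qed.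

Lemma flatten_merge C b : (b.+1 < size C)%N ->
  flatten (merge_at b C) = flatten C.
Proof.
move=> hb; rewrite {2}(merge_split hb) /merge_at !flatten_cat /=.
by rewrite !catA.
Qed.

Lemma size_merge C b : (b.+1 < size C)%N ->
  size (merge_at b C) = (size C).-1.
Proof.
move=> hb; rewrite {2}(merge_split hb) /merge_at !size_cat /=.
by rewrite !addnS.
Qed.

Lemma mem_merge C b (X : seq 'I_K) : X \in merge_at b C ->
  X \in C \/ X = nth [::] C b ++ nth [::] C b.+1.
Proof.
rewrite /merge_at mem_cat inE => /orP[/mem_take|/orP[/eqP->|/mem_drop]]; by auto.
Qed.

End Partitions.

Section Prob.
Variables (R : realType) (N J K : nat) (nu : 'I_K -> R) (B : 'I_J -> 'I_K -> R).
Hypothesis nu0 : forall k, 0 <= nu k.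
Hypothesis nu1 : \sum_(k < K) nu k = 1.
Hypothesis B01 : forall j k, 0 <= B j k <= 1.

Definition wgt (w : {ffun 'I_N -> 'I_K} * data N J) : R :=
  \prod_(i < N) (nu (w.1 i) * \prod_(j < J) bern (B j (w.1 i)) (w.2 (i, j))).

Lemma bern_ge0 (x : R) y : 0 <= x <= 1 -> 0 <= bern x y.
Proof. by case/andP=> x0 x1; case: y => //=; rewrite subr_ge0. Qed.

Lemma wgt_ge0 w : 0 <= wgt w.
Proof.
apply: prodr_ge0 => i _; apply: mulr_ge0 => //.
by apply: prodr_ge0 => j _; apply: bern_ge0.
Qed.

Lemma probE (E : pred (data N J)) :
  prob nu B E = \sum_(w : {ffun 'I_N -> 'I_K} * data N J | E w.2) wgt w.
Proof. by []. Qed.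

Lemma prob_ge0 (E : pred (data N J)) : 0 <= prob nu B E.
Proof. by rewrite probE; apply: sumr_ge0 => w _; exact: wgt_ge0. Qed.

Lemma prob_le (E1 E2 : pred (data N J)) :
  (forall Y, E1 Y -> E2 Y) -> prob nu B E1 <= prob nu B E2.
Proof.
move=> H; rewrite !probE [X in _ <= X](bigID (fun w => E1 w.2)) /=.
have -> : \sum_(i | E2 i.2 && E1 i.2) wgt i = \sum_(i | E1 i.2) wgt i.
  by apply: eq_bigl => w; case E: (E1 w.2); rewrite ?andbT ?andbF ?(H _ E).
by rewrite lerDl; apply: sumr_ge0 => w _; exact: wgt_ge0.
Qed.

Lemma prob_total : prob nu B (fun _ : data N J => true) = 1.
Proof.
rewrite probE.
rewrite -(pair_big (fun _ => true) (fun _ => true) (fun xi Y => wgt (xi, Y))) /=.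
transitivity (\sum_(xi : {ffun 'I_N -> 'I_K}) \prod_(i < N) nu (xi i)).
  apply: eq_bigr => xi _.
  rewrite /wgt /=.
  under eq_bigr do rewrite big_split /=.
  rewrite -big_distrr /=.
  have -> : \sum_(Y : data N J) \prod_(i < N) \prod_(j < J) bern (B j (xi i)) (Y (i, j)) = 1.
    under eq_bigr => Y _.
      rewrite (pair_big (fun _ => true) (fun _ => true)
        (fun (i : 'I_N) (j : 'I_J) => bern (B j (xi i)) (Y (i, j)))) /=.
      under eq_bigr => p _ do rewrite -surjective_pairing.
      over.
    rewrite -(bigA_distr_bigA (fun (p : 'I_N * 'I_J) (b : bool) => bern (B p.2 (xi p.1)) b)) /=.
    rewrite big1 // => p _; rewrite big_bool /=; ring.
  by rewrite mulr1.
rewrite -(bigA_distr_bigA (fun (i : 'I_N) (k : 'I_K) => nu k)) /=.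
by rewrite big1 // => i _; exact: nu1.
Qed.

Lemma prob_compl (E : pred (data N J)) :
  prob nu B E + prob nu B (fun Y => ~~ E Y) = 1.
Proof.
rewrite -prob_total !probE [RHS](bigID (fun w => E w.2)) /=.
by congr (_ + _); apply: eq_bigl.
Qed.

Lemma prob_le1 (E : pred (data N J)) : prob nu B E <= 1.
Proof.
rewrite -(prob_compl E) lerDl; exact: prob_ge0.
Qed.

Lemma prob_union (E1 E2 : pred (data N J)) :
  prob nu B (fun Y => E1 Y || E2 Y) <= prob nu B E1 + prob nu B E2.
Proof.
rewrite !probE [X in X <= _]big_mkcond [X in _ <= X + _]big_mkcond.
rewrite [X in _ <= _ + X]big_mkcond -big_split /=.
apply: ler_sum => w _.
case: (E1 w.2); case: (E2 w.2) => //=; rewrite ?add0r ?addr0 //.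
by rewrite lerDl; exact: wgt_ge0.
Qed.

End Prob.

Section Gam.
Variables (R : realType) (N J K : nat) (nu : 'I_K -> R) (B : 'I_J -> 'I_K -> R)
  (Y : data N J).
Hypothesis nupos : forall k, 0 < nu k.
Hypothesis nusum : \sum_(k < K) nu k = 1.
Variable lo : R.
Hypothesis lo0 : 0 < lo.
Hypothesis Bint : forall j k, lo <= B j k <= 1 - lo.

Definition Lik i := \sum_(h < K) nu h * classlik B Y i h.

Lemma bern_int (x : R) y : lo <= x <= 1 - lo -> lo <= bern x y <= 1.
Proof. have l0 := lo0; by case/andP=> h1 h2; case: y => /=; apply/andP; split; lra. Qed.

Lemma classlik_lb i k : lo ^+ J <= classlik B Y i k.
Proof.
rewrite /classlik -[J in lo ^+ J]card_ord -prodr_const.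
apply: ler_prod => j' _; have /andP[h1 h2] := bern_int (Y (i, j')) (Bint j' k).
by rewrite h1 ltW.
Qed.

Lemma classlik_le1 i k : classlik B Y i k <= 1.
Proof.
apply: prodr_ile1 => j' _; have /andP[h1 h2] := bern_int (Y (i, j')) (Bint j' k).
by rewrite h2 andbT; apply: le_trans h1; apply: ltW.
Qed.

Lemma classlik_gt0 i k : 0 < classlik B Y i k.
Proof. by apply: lt_le_trans (classlik_lb i k); apply: exprn_gt0. Qed.

Lemma Lik_ge i k : nu k * classlik B Y i k <= Lik i.
Proof.
rewrite /Lik (bigD1 k) //= lerDl; apply: sumr_ge0 => h _.
by apply: mulr_ge0; [apply: ltW | apply: ltW; apply: classlik_gt0].
Qed.

Lemma Lik_gt0 i : (0 < K)%N -> 0 < Lik i.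
Proof.
move=> K0; apply: lt_le_trans (Lik_ge i (Ordinal K0)).
by apply: mulr_gt0 => //; apply: classlik_gt0.
Qed.

Lemma Lik_le1 i : Lik i <= 1.
Proof.
rewrite -nusum /Lik; apply: ler_sum => h _.
by apply: ler_piMr; [apply: ltW | apply: classlik_le1].
Qed.

Lemma gam_ge0 i k : 0 <= gamma nu B Y i k.
Proof.
rewrite /gamma; apply: divr_ge0; last first.
  by apply: sumr_ge0 => h _; apply: mulr_ge0; apply: ltW => //; apply: classlik_gt0.
by apply: mulr_ge0; apply: ltW => //; apply: classlik_gt0.
Qed.

Lemma gam_le1 i k : gamma nu B Y i k <= 1.
Proof.
have K0 : (0 < K)%N by apply: leq_ltn_trans (ltn_ord k).
rewrite /gamma ler_pdivrMr ?mul1r; first exact: Lik_ge.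
exact: Lik_gt0.
Qed.

Lemma gam_lb i k : nu k * lo ^+ J <= gamma nu B Y i k.
Proof.
have K0 : (0 < K)%N by apply: leq_ltn_trans (ltn_ord k).
rewrite /gamma ler_pdivlMr; last exact: Lik_gt0.
apply: le_trans (_ : nu k * lo ^+ J * 1 <= _).
  by apply: ler_wpM2l; [apply: mulr_ge0; [apply: ltW | apply: exprn_ge0; apply: ltW] | apply: Lik_le1].
rewrite mulr1; apply: ler_wpM2l; [apply: ltW | apply: classlik_lb] => //.
Qed.

End Gam.

Section EM.
Variables (R : realType) (N J K : nat) (nu : 'I_K -> R) (B : 'I_J -> 'I_K -> R)
  (Y : data N J).
Hypothesis HM : is_MLE nu B Y.
Hypothesis nupos : forall k, 0 < nu k.
Variable lo : R.
Hypothesis lo0 : 0 < lo.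
Hypothesis Bint : forall j k, lo <= B j k <= 1 - lo.
Variables (j : 'I_J) (k : 'I_K).

Let nusum : \sum_(k < K) nu k = 1.
Proof. by case: HM => -[]. Qed.

Let t0 := B j k.
Let r i := \prod_(j' < J | j' != j) bern (B j' k) (Y (i, j')).
Let sg i : R := if Y (i, j) then 1 else -1.
Let c i := nu k * r i * sg i.
Let Bp (h : R) := fun j' k' => if (j' == j) && (k' == k) then t0 + h else B j' k'.

Let L i := Lik nu B Y i.

Lemma classlik_split i : classlik B Y i k = bern t0 (Y (i, j)) * r i.
Proof. by rewrite /classlik (bigD1 j). Qed.

Lemma classlik_Bp h i k' : classlik (Bp h) Y i k' =
  if k' == k then bern (t0 + h) (Y (i, j)) * r i else classlik B Y i k'.
Proof.
case: eqP => [->|/eqP nk].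
  rewrite /classlik (bigD1 j) //= /Bp !eqxx /=; congr (_ * _).
  by apply: eq_bigr => j' /negbTE ->.
by apply: eq_bigr => j' _; rewrite /Bp (negbTE nk) andbF.
Qed.

Lemma bern_shift h y : bern (t0 + h) y = bern t0 y + h * (if y then 1 else -1).
Proof. by case: y => /=; ring. Qed.

Lemma Lik_Bp h i : \sum_(k' < K) nu k' * classlik (Bp h) Y i k' = L i + h * c i.
Proof.
rewrite /L /Lik (bigD1 k) //= [in RHS](bigD1 k) //= classlik_Bp eqxx.
rewrite (eq_bigr (fun k' => nu k' * classlik B Y i k')); last first.
  by move=> k' /negbTE nk; rewrite classlik_Bp nk.
rewrite classlik_split bern_shift /c /sg.
set s := \sum_(_ < K | _) _; set b := bern _ _; set q := if _ then _ else _.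
ring.
Qed.

Lemma K0 : (0 < K)%N.
Proof. exact: leq_ltn_trans (ltn_ord k). Qed.

Lemma L_gt0 i : 0 < L i.
Proof. exact: (Lik_gt0 Y nupos lo0 Bint i K0). Qed.

Let x i := c i / L i.

Lemma gam_x i : gamma nu B Y i k * (yv R Y i j - t0) = t0 * (1 - t0) * x i.
Proof.
have L0 := L_gt0 i.
rewrite /gamma /x /c /sg /yv classlik_split -/(Lik nu B Y i) -/(L i).
case: (Y (i, j)) => /=; field; lra.
Qed.

Lemma loglik_fin (B2 : 'I_J -> 'I_K -> R) :
  (forall i, 0 < \sum_(k' < K) nu k' * classlik B2 Y i k') ->
  loglik nu B2 Y = (\sum_(i < N) ln (\sum_(k' < K) nu k' * classlik B2 Y i k'))%:E.
Proof.
move=> H; rewrite /loglik -sumEFin; apply: eq_bigr => i _.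
by rewrite /elog H.
Qed.

Let X := 1 + \sum_(i < N) `|x i|.
Let mu := t0 * (1 - t0) / (2 * X).

Lemma X_ge1 : 1 <= X.
Proof. by rewrite /X lerDl; apply: sumr_ge0 => i _. Qed.

Lemma x_le_X i : `|x i| <= X.
Proof.
rewrite /X (bigD1 i) //= addrCA lerDl; apply: addr_ge0 => //.
by apply: sumr_ge0.
Qed.

Lemma t0_int : lo <= t0 <= 1 - lo.
Proof. exact: Bint. Qed.

Lemma ineq h : `|h| <= mu ->
  h * (\sum_(i < N) x i) <= 2 * h ^+ 2 * (\sum_(i < N) x i ^+ 2).
Proof.
move=> hmu.
have X1 := X_ge1. have l0 := lo0.
have /andP[tl th] := t0_int.
have tt : 0 < t0 * (1 - t0) by apply: mulr_gt0; lra.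
have tt1 : t0 * (1 - t0) <= t0.
  by rewrite mulrBr mulr1 lerBlDr lerDl; apply: mulr_ge0; lra.
have tt2 : t0 * (1 - t0) <= 1 - t0.
  by rewrite mulrC; apply: ler_piMr; lra.
have muX : mu * X = t0 * (1 - t0) / 2 by rewrite /mu; field; lra.
have mu_le : mu <= t0 * (1 - t0) / 2.
  rewrite -muX ler_peMr //; first by rewrite /mu; apply: divr_ge0; lra.
have hx i : `|h * x i| <= 1 / 2.
  rewrite normrM; apply: le_trans (_ : mu * X <= _); last first.
    rewrite muX; have : t0 * (1 - t0) <= 1 by lra.
    move=> h1; lra.
  apply: ler_pM => //; exact: x_le_X.
have hr : `|h| <= t0 * (1 - t0) / 2 by apply: le_trans mu_le.
have hn := ler_norm h; have hn2 : - h <= `|h| by rewrite -normrN ler_norm.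
have Lp i : \sum_(k' < K) nu k' * classlik (Bp h) Y i k' = L i * (1 + h * x i).
  rewrite Lik_Bp /x; field; have := L_gt0 i; lra.
have z i : -(1/2) <= h * x i.
  have := hx i; have := ler_norm (- (h * x i)); rewrite normrN; lra.
have Lp0 i : 0 < \sum_(k' < K) nu k' * classlik (Bp h) Y i k'.
  rewrite Lp; apply: mulr_gt0; first exact: L_gt0.
  have := z i; lra.
have unitBp : in_unit (Bp h).
  move=> j' k'; rewrite /Bp; case: ifP => _; first by apply/andP; split; lra.
  by have /andP[h1 h2] := Bint j' k'; apply/andP; split; lra.
case: HM => simp _ Hmax.
have := Hmax nu (Bp h) simp unitBp.
rewrite loglik_fin // loglik_fin; last first.
  move=> i; exact: L_gt0.
rewrite lee_fin.
have El i : ln (\sum_(k' < K) nu k' * classlik (Bp h) Y i k') = ln (L i) + ln (1 + h * x i).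
  rewrite Lp lnM // posrE; first exact: L_gt0.
  by have := z i; lra.
rewrite (eq_bigr _ (fun i _ => El i)) big_split /= -[X in _ <= X]addr0 lerD2l => Hs.
have lb : \sum_(i < N) (h * x i - 2 * (h * x i) ^+ 2) <= \sum_(i < N) ln (1 + h * x i).
  by apply: ler_sum => i _; apply: ln1Dx_ge; exact: z.
have := le_trans lb Hs.
rewrite sumrB -mulr_sumr.
have -> : \sum_(i < N) 2 * (h * x i) ^+ 2 = 2 * h ^+ 2 * \sum_(i < N) x i ^+ 2.
  by rewrite mulr_sumr; apply: eq_bigr => i _; ring.
lra.
Qed.

Lemma EM_id : \sum_(i < N) gamma nu B Y i k * yv R Y i j =
  B j k * \sum_(i < N) gamma nu B Y i k.
Proof.
have X1 := X_ge1. have l0 := lo0.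
have /andP[tl th] := t0_int.
have tt : 0 < t0 * (1 - t0) by apply: mulr_gt0; lra.
have D0 : \sum_(i < N) x i = 0.
  apply: (@foc _ _ (\sum_(i < N) x i ^+ 2) mu).
  - by rewrite /mu; apply: divr_gt0 => //; lra.
  - rewrite /mu ler_pdivrMr; last by lra.
    have : t0 * (1 - t0) <= 1 by nra.
    lra.
  - by apply: sumr_ge0 => i _; apply: sqr_ge0.
  - exact: ineq.
apply/eqP; rewrite -subr_eq0 mulr_sumr -sumrB.
rewrite (eq_bigr (fun i => gamma nu B Y i k * (yv R Y i j - t0))); last first.
  by move=> i _; rewrite /t0; ring.
rewrite (eq_bigr _ (fun i _ => gam_x i)) -mulr_sumr D0 mulr0 //.
Qed.

End EM.

Lemma flatten_single (T : Type) (s : seq T) : flatten [seq [:: x] | x <- s] = s.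
Proof. by elim: s => //= x s ->. Qed.

Lemma sorted_nonuniq (R : realType) (s : seq R) : sorted <=%R s -> ~~ uniq s ->
  exists i, (i.+1 < size s)%N /\ nth 0 s i = nth 0 s i.+1.
Proof.
elim: s => [|x s IH] //= Hs.
rewrite negb_and negbK => /orP[xs|nu].
  case: s Hs xs IH => [|y s] //= /andP[xy Hp] xs _.
  exists 0%N; split => //=.
  have := order_path_min (@le_trans _ _) Hp => /allP Ha.
  move: xs; rewrite inE => /orP[/eqP -> //|/Ha yx].
  by apply/eqP; rewrite eq_le xy yx.
have [i [hi he]] := IH (path_sorted Hs) nu.
by exists i.+1.
Qed.

Lemma uniq_map_eq (T1 T2 : eqType) (f : T1 -> T2) (s : seq T1) x y :
  uniq (map f s) -> x \in s -> y \in s -> f x = f y -> x = y.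
Proof.
elim: s => [|z s IH] //= /andP[fz U]; rewrite !inE.
move=> /orP[/eqP->|xs] /orP[/eqP->|ys] // e.
- by move: fz; rewrite e; move/negP; case; apply/mapP; exists y.
- by move: fz; rewrite -e; move/negP; case; apply/mapP; exists x.
- exact: IH.
Qed.

Lemma uniq_blocks (T : eqType) (C : seq (seq T)) :
  uniq (flatten C) -> all (fun X => X != [::]) C -> uniq C.
Proof.
elim: C => [|X C IH] //= U /andP[ne A].
rewrite cat_uniq in U; case/and3P: U => _ D U.
rewrite IH // andbT; apply/negP => XC.
case: X ne D XC => [|x X] // _ /hasPn D XC.
have : x \in flatten C by apply/flattenP; exists (x :: X) => //; exact: mem_head.
by move/D; rewrite /= mem_head.
Qed.

Lemma subseq_merge (T : eqType) (x0 : T) (s : seq T) b : (b.+1 < size s)%N ->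
  subseq (take b s ++ nth x0 s b :: drop b.+2 s) s.
Proof.
move=> hb.
have E : s = take b s ++ nth x0 s b :: nth x0 s b.+1 :: drop b.+2 s.
  rewrite -{1}(cat_take_drop b s); congr (_ ++ _).
  rewrite (drop_nth x0); last by apply: ltn_trans hb.
  by rewrite (drop_nth x0).
rewrite [X in subseq _ X]E subseq_cat2l /= eqxx.
exact: subseq_cons.
Qed.

Lemma wavg (R : realType) (I : eqType) (s : seq I) (w v : I -> R) (lo hi : R) :
  (forall x, x \in s -> 0 <= w x) -> 0 < \sum_(x <- s) w x ->
  (forall x, x \in s -> lo <= v x <= hi) ->
  lo <= (\sum_(x <- s) v x * w x) / \sum_(x <- s) w x <= hi.
Proof.
move=> w0 W0 hv; apply/andP; split.
  rewrite ler_pdivlMr // mulr_sumr big_seq [X in _ <= X]big_seq.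
  apply: ler_sum => x xs; apply: ler_wpM2r; first exact: w0.
  by case/andP: (hv x xs).
rewrite ler_pdivrMr // mulr_sumr big_seq [X in _ <= X]big_seq.
apply: ler_sum => x xs; apply: ler_wpM2r; first exact: w0.
by case/andP: (hv x xs).
Qed.

Lemma xlog_fin (R : realType) (c x : R) : 0 < x -> xlog c x = (c * ln x)%:E.
Proof.
move=> x0; rewrite /xlog; case: eqP => [->|_]; first by rewrite mul0r.
by rewrite /elog x0 EFinM.
Qed.

Section QA.
Variables (R : realType) (N J K : nat) (nu : 'I_K -> R) (B : 'I_J -> 'I_K -> R)
  (Y : data N J) (j : 'I_J).
Hypothesis HM : is_MLE nu B Y.
Variable nu0 : R.
Hypothesis nu0pos : 0 < nu0.
Hypothesis nulb : forall k, nu0 <= nu k.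
Variables (Bs : 'I_J -> 'I_K -> R) (eps delta gap : R).
Hypothesis delta0 : 0 < delta.
Hypothesis Bs_int : forall j' k, delta <= Bs j' k <= 1 - delta.
Hypothesis close : forall j' k, `|B j' k - Bs j' k| <= eps.
Hypothesis eps_d : eps <= delta / 2.
Hypothesis gap0 : 0 < gap.
Hypothesis gapH : forall g h, Bs j g != Bs j h -> gap <= `|Bs j g - Bs j h|.
Hypothesis eps_g : 4 * eps <= gap.
Hypothesis N0 : (0 < N)%N.

Let lo := delta / 2.
Lemma lo0 : 0 < lo. Proof. by rewrite /lo divr_gt0. Qed.
Lemma Bint j' k : lo <= B j' k <= 1 - lo.
Proof.
have := close j' k; have /andP[h1 h2] := Bs_int j' k.
have := ler_norm (B j' k - Bs j' k); have := ler_norm (- (B j' k - Bs j' k)).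
rewrite normrN /lo => *; have := eps_d; have := delta0 => *; apply/andP; split; lra.
Qed.
Lemma nupos k : 0 < nu k. Proof. exact: lt_le_trans (nulb k). Qed.

Let g := gamma nu B Y.
Definition nn k := \sum_(i < N) g i k.
Let a k := B j k.

Lemma S_eq k : \sum_(i < N) g i k * yv R Y i j = a k * nn k.
Proof. exact: (EM_id HM nupos lo0 Bint j k). Qed.

Definition c0 := nu0 * lo ^+ J.
Lemma c0_gt0 : 0 < c0.
Proof. by apply: mulr_gt0 => //; apply: exprn_gt0; exact: lo0. Qed.

Lemma nn_lb k : N%:R * c0 <= nn k.
Proof.
have -> : N%:R * c0 = \sum_(i < N) c0 by rewrite sumr_const card_ord mulr_natl.
apply: ler_sum => i _; apply: le_trans (gam_lb Y nupos _ lo0 Bint i k).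
  by rewrite /c0 ler_wpM2r // exprn_ge0 // ltW // lo0.
by case: HM => -[].
Qed.

Lemma nn_ub k : nn k <= N%:R.
Proof.
have -> : N%:R = \sum_(i < N) (1 : R) by rewrite sumr_const card_ord.
by apply: ler_sum => i _; apply: (gam_le1 Y nupos lo0 Bint).
Qed.

Lemma nn_gt0 k : 0 < nn k.
Proof.
apply: lt_le_trans (nn_lb k); apply: mulr_gt0; last exact: c0_gt0.
by rewrite ltr0n.
Qed.

Lemma nn_ge0 k : 0 <= nn k. Proof. exact: ltW (nn_gt0 k). Qed.

Definition qq (beta : 'I_K -> R) :=
  \sum_(k < K) nn k * (a k * ln (beta k) + (1 - a k) * ln (1 - beta k)).

Lemma yv01 i : yv R Y i j = 0 \/ yv R Y i j = 1.
Proof. by rewrite /yv; case: (Y (i, j)); auto. Qed.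

Lemma Qj_eq (beta : 'I_K -> R) : (forall k, 0 < beta k < 1) ->
  Qj (hgam nu B Y) Y j beta = (qq beta)%:E.
Proof.
move=> hb; rewrite /Qj /hgam -/g.
have E1 i k : (xlog (g i k * yv R Y i j) (beta k) +
      xlog (g i k * (1 - yv R Y i j)) (1 - beta k))%E =
   (g i k * yv R Y i j * ln (beta k) + g i k * (1 - yv R Y i j) * ln (1 - beta k))%:E.
  have /andP[b0 b1] := hb k.
  by rewrite !xlog_fin ?subr_gt0 // -EFinD.
rewrite (eq_bigr _ (fun i _ => eq_bigr _ (fun k _ => E1 i k))).
rewrite (eq_bigr _ (fun i _ => sumEFin _ _ _)) sumEFin; congr (_%:E).
rewrite exchange_big /qq; apply: eq_bigr => k _.
rewrite big_split /= -!mulr_suml.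
have -> : \sum_(i < N) g i k * (1 - yv R Y i j) = nn k - a k * nn k.
  rewrite -S_eq /nn -sumrB; apply: eq_bigr => i _; ring.
rewrite S_eq; ring.
Qed.

Lemma a_int k : lo <= a k <= 1 - lo. Proof. exact: Bint. Qed.
Lemma a01 k : 0 < a k < 1.
Proof. have /andP[h1 h2] := a_int k; have := lo0; move=> l0; apply/andP; split; lra. Qed.

Lemma loss_eq (beta : 'I_K -> R) : (forall k, 0 < beta k < 1) ->
  qq a - qq beta = \sum_(k < K) nn k * kl (a k) (beta k).
Proof.
move=> hb; rewrite /qq -sumrB; apply: eq_bigr => k _; rewrite /kl; ring.
Qed.

Lemma loss_ge0 (beta : 'I_K -> R) : (forall k, 0 < beta k < 1) -> qq beta <= qq a.
Proof.
move=> hb; rewrite -subr_ge0 loss_eq //; apply: sumr_ge0 => k _.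
by apply: mulr_ge0; [exact: nn_ge0 | apply: kl_ge0; [exact: a01 | exact: hb]].
Qed.

Lemma csol_eq (C : seq (seq 'I_K)) k :
  csol (hgam nu B Y) Y j C k =
  (\sum_(k' <- block C k) a k' * nn k') / (\sum_(k' <- block C k) nn k').
Proof.
rewrite /csol /hgam -/g; congr (_ / _).
  rewrite exchange_big /=; apply: eq_bigr => k' _; exact: S_eq.
by rewrite exchange_big.
Qed.


Lemma sum_seq_ge (s : seq 'I_K) (w : 'I_K -> R) x : x \in s ->
  (forall y, 0 <= w y) -> w x <= \sum_(y <- s) w y.
Proof.
move=> xs w0; rewrite (big_rem x xs) /= lerDl; apply: sumr_ge0 => y _; exact: w0.
Qed.

Lemma blk_pos C k : k \in block C k -> 0 < \sum_(k' <- block C k) nn k'.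
Proof.
move=> kb; apply: lt_le_trans (nn_gt0 k) _; apply: sum_seq_ge => // y; exact: nn_ge0.
Qed.

Definition validp (C : seq (seq 'I_K)) := uniq (flatten C) /\ forall k, k \in flatten C.
Definition homog (C : seq (seq 'I_K)) := forall X, X \in C ->
  forall x y, x \in X -> y \in X -> Bs j x = Bs j y.

Lemma csol_int C k : validp C -> lo <= csol (hgam nu B Y) Y j C k <= 1 - lo.
Proof.
case=> U H; rewrite csol_eq.
have [_ kb] := block_mem (H k).
apply: wavg; first by move=> x _; exact: nn_ge0.
  exact: blk_pos.
by move=> x _; exact: a_int.
Qed.

Lemma csol01 C k : validp C -> 0 < csol (hgam nu B Y) Y j C k < 1.
Proof.
move=> v; have /andP[h1 h2] := csol_int k v; have l0 := lo0.
apply/andP; split; lra.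
Qed.

Lemma csol_close C k : validp C -> homog C ->
  `|csol (hgam nu B Y) Y j C k - Bs j k| <= eps.
Proof.
case=> U H Hh; rewrite csol_eq ler_distl.
have [bC kb] := block_mem (H k).
apply: wavg; first by move=> x _; exact: nn_ge0.
  exact: blk_pos.
move=> x xb; rewrite -ler_distl /a (Hh _ bC k x kb xb); exact: close.
Qed.

Lemma a_close k : `|a k - Bs j k| <= eps. Proof. exact: close. Qed.

Lemma delta_le (k : 'I_K) : delta <= 1 / 2.
Proof. by have /andP[h1 h2] := Bs_int j k; lra. Qed.


Lemma pp_lb p (k : 'I_K) : lo <= p <= 1 - lo -> delta / 4 <= p * (1 - p).
Proof.
have d2 := delta_le k; have d0 := delta0.
case/andP; rewrite /lo => h1 h2.
have h3 : 0 <= (p - delta / 2) * (1 - delta / 2 - p) by apply: mulr_ge0; lra.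
have h4 : delta / 4 <= delta / 2 * (1 - delta / 2) by nra.
nra.
Qed.

Lemma loss_ub C : validp C -> homog C ->
  qq a - qq (csol (hgam nu B Y) Y j C) <= N%:R * K%:R * (16 * eps ^+ 2 / delta).
Proof.
move=> v Hh; rewrite loss_eq; last by move=> k; exact: csol01.
have -> : N%:R * K%:R * (16 * eps ^+ 2 / delta) =
   \sum_(k < K) N%:R * (16 * eps ^+ 2 / delta).
  by rewrite sumr_const card_ord -mulr_natr; ring.
apply: ler_sum => k _.
set p := csol _ _ _ _ k.
have p01 := csol01 k v; have pint := csol_int k v.
have d0 := delta0.
have e0 : 0 <= eps by apply: le_trans (a_close k).
have hap : `|a k - p| <= 2 * eps.
  have := a_close k; have := csol_close k v Hh; rewrite -/p => h1 h2.
  have := ler_normB (a k - Bs j k) (p - Bs j k).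
  have -> : a k - Bs j k - (p - Bs j k) = a k - p by ring.
  lra.
have hsq : (a k - p) ^+ 2 <= 4 * eps ^+ 2.
  rewrite -real_normK ?num_real //.
  have : 0 <= `|a k - p| by [].
  move=> h0; rewrite !expr2; nra.
have hpp := pp_lb k pint.
apply: ler_pM; first exact: nn_ge0.
  by apply: kl_ge0 => //; exact: a01.
  exact: nn_ub.
apply: le_trans (kl_ub (a01 k) p01) _.
have pp0 : 0 < p * (1 - p) by apply: lt_le_trans hpp; lra.
rewrite ler_pdivrMr //.
apply: le_trans hsq _.
have -> : 16 * eps ^+ 2 / delta * (p * (1 - p)) = 4 * eps ^+ 2 * ((p * (1 - p)) / (delta / 4)).
  by field; lra.
rewrite ler_peMr //; first by apply: mulr_ge0 => //; exact: sqr_ge0.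
by rewrite ler_pdivlMr ?mul1r //; lra.
Qed.

Lemma loss_lb C : validp C ->
  (exists X, [/\ X \in C & exists x y, [/\ x \in X, y \in X & Bs j x != Bs j y]]) ->
  N%:R * c0 * (gap ^+ 2 / 64) <= qq a - qq (csol (hgam nu B Y) Y j C).
Proof.
case=> U H [X [XC [x [y [xX yX nxy]]]]].
have bx := block_eq U XC xX; have byy := block_eq U XC yX.
rewrite loss_eq; last by move=> k; exact: csol01.
set p := csol _ _ _ _.
have pxy : p x = p y by rewrite /p !csol_eq bx byy.
have hxy : gap / 2 <= `|a x - a y|.
  have g1 := gapH nxy; have c1 := a_close x; have c2 := a_close y.
  have t1 := ler_normD (Bs j x - a x - (Bs j y - a y)) (a x - a y).
  have e1 : Bs j x - a x - (Bs j y - a y) + (a x - a y) = Bs j x - Bs j y by ring.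
  rewrite e1 in t1.
  have t2 := ler_normB (Bs j x - a x) (Bs j y - a y).
  rewrite [`|Bs j x - a x|]distrC [`|Bs j y - a y|]distrC in t2.
  have := eps_g; lra.
have : gap / 4 <= `|a x - p x| \/ gap / 4 <= `|a y - p y|.
  rewrite pxy; case: (lerP (gap / 4) `|a x - p y|) => h; [by left|right].
  have := ler_normB (a x - p y) (a y - p y).
  have -> : a x - p y - (a y - p y) = a x - a y by ring.
  lra.
have term z : gap / 4 <= `|a z - p z| -> N%:R * c0 * (gap ^+ 2 / 64) <=
    \sum_(k < K) nn k * kl (a k) (p k).
  move=> hz; rewrite (bigD1 z) //= -[X in X <= _]addr0; apply: lerD; last first.
    apply: sumr_ge0 => k _; apply: mulr_ge0; first exact: nn_ge0.
    by apply: kl_ge0; [exact: a01 | exact: csol01].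
  apply: ler_pM.
  - by apply: mulr_ge0; [rewrite ler0n | exact: ltW c0_gt0].
  - by apply: divr_ge0 => //; exact: sqr_ge0.
  - exact: nn_lb.
  apply: le_trans (kl_lb (a01 z) (csol01 z (conj U H))).
  have g0 := gap0.
  have : (gap / 4) ^+ 2 <= (a z - p z) ^+ 2.
    rewrite -[X in _ <= X]real_normK ?num_real //.
    rewrite !expr2; apply: ler_pM => //; lra.
  move=> h; have -> : gap ^+ 2 / 64 = (gap / 4) ^+ 2 / 4 by field.
  by rewrite ler_pM2r.
by case=> h; [exact: term h | exact: term h].
Qed.


Hypothesis K0 : (0 < K)%N.
Implicit Types C : seq (seq 'I_K).

Definition vv (X : seq 'I_K) : R := head 0 (map (Bs j) X).
Definition nonempty (C : seq (seq 'I_K)) := all (fun X => X != [::]) C.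
Definition Inv C := [/\ validp C, nonempty C, homog C & sorted <=%R (map vv C)].
Definition mstar := card_distinct (Bs j).
Definition AA := N%:R * K%:R * (16 * eps ^+ 2 / delta).
Definition cN := N%:R * c0 * (gap ^+ 2 / 64).
Hypothesis HC : AA < cN.

Lemma vv_mem C X x : homog C -> X \in C -> x \in X -> Bs j x = vv X.
Proof.
move=> Hh; case: X => [|x0 X'] // XC xX; rewrite /vv /=.
exact: Hh XC x x0 xX (mem_head _ _).
Qed.

Lemma nth_mem_C C b : (b < size C)%N -> nth [::] C b \in C.
Proof. exact: mem_nth. Qed.

Lemma validp_merge C b : validp C -> (b.+1 < size C)%N -> validp (merge_at b C).
Proof. by case=> U H hb; split; rewrite flatten_merge. Qed.

Lemma nonempty_merge C b : nonempty C -> (b.+1 < size C)%N -> nonempty (merge_at b C).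
Proof.
move=> /allP ne hb; apply/allP => X /mem_merge [/ne //|->].
have := ne _ (nth_mem_C (ltnW hb)).
by case: (nth [::] C b).
Qed.

Lemma homog_merge C b : homog C -> nonempty C -> (b.+1 < size C)%N ->
  vv (nth [::] C b) = vv (nth [::] C b.+1) -> homog (merge_at b C).
Proof.
move=> Hh ne hb e X /mem_merge [XC|->]; first exact: Hh.
have m1 := nth_mem_C (ltnW hb); have m2 := nth_mem_C hb.
have H x : x \in nth [::] C b ++ nth [::] C b.+1 -> Bs j x = vv (nth [::] C b).
  rewrite mem_cat => /orP[xb|xb]; first exact: vv_mem m1 xb.
  by rewrite e; exact: vv_mem m2 xb.
by move=> x y /H -> /H ->.
Qed.

Lemma vv_cat X Y' : X != [::] -> vv (X ++ Y') = vv X.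
Proof. by case: X. Qed.

Lemma sorted_merge C b : nonempty C -> (b.+1 < size C)%N ->
  sorted <=%R (map vv C) -> sorted <=%R (map vv (merge_at b C)).
Proof.
move=> /allP ne hb Hs.
have E : map vv (merge_at b C) =
   take b (map vv C) ++ nth 0 (map vv C) b :: drop b.+2 (map vv C).
  rewrite /merge_at map_cat /= map_take map_drop (nth_map [::]) ?(ltnW hb) //.
  by rewrite vv_cat // ne // nth_mem_C // ltnW.
rewrite E; apply: subseq_sorted Hs; first exact: le_trans.
by apply: subseq_merge; rewrite size_map.
Qed.

Lemma Qj_valid C : validp C ->
  Qj (hgam nu B Y) Y j (csol (hgam nu B Y) Y j C) = (qq (csol (hgam nu B Y) Y j C))%:E.
Proof. by move=> v; apply: Qj_eq => k; exact: csol01. Qed.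

Lemma mixed_merge C b : nonempty C -> homog C -> (b.+1 < size C)%N ->
  vv (nth [::] C b) != vv (nth [::] C b.+1) ->
  exists X, [/\ X \in merge_at b C & exists x y, [/\ x \in X, y \in X & Bs j x != Bs j y]].
Proof.
move=> /allP ne Hh hb e.
have m1 := nth_mem_C (ltnW hb); have m2 := nth_mem_C hb.
exists (nth [::] C b ++ nth [::] C b.+1); split.
  by rewrite /merge_at mem_cat inE eqxx orbT.
move: e (ne _ m1) (ne _ m2).
case: (nth [::] C b) => [|x X1] // ; case: (nth [::] C b.+1) => [|y Y1] // e _ _.
exists x, y; split; first by rewrite mem_head.
  by rewrite mem_cat mem_head orbT.
exact: e.
Qed.

Lemma mstar_le C : validp C -> homog C -> (mstar <= size (undup (map vv C)))%N.
Proof.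
case=> U H Hh; apply: uniq_leq_size; first exact: undup_uniq.
move=> z; rewrite mem_undup => /mapP [k _ ->].
have [bC kb] := block_mem (H k).
by rewrite mem_undup (vv_mem Hh bC kb); apply: map_f.
Qed.

Lemma size_vv_le C : nonempty C -> (size (undup (map vv C)) <= mstar)%N.
Proof.
move=> /allP ne; apply: uniq_leq_size; first exact: undup_uniq.
move=> z; rewrite mem_undup => /mapP [X XC ->].
move: (ne X XC); case: X XC => [|x X'] // _ _.
by rewrite mem_undup /vv /=; apply: map_f; rewrite mem_enum.
Qed.

Lemma mstar_gt0 : (0 < mstar)%N.
Proof.
rewrite /mstar /card_distinct.
have : Bs j (Ordinal K0) \in undup [seq Bs j k | k <- enum 'I_K].
  by rewrite mem_undup; apply: map_f; rewrite mem_enum.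
by case: (undup _).
Qed.

Lemma mstar_leK : (mstar <= K)%N.
Proof.
rewrite /mstar /card_distinct; apply: leq_trans (size_undup _) _.
by rewrite size_map size_enum_ord.
Qed.

Lemma adjacent C : Inv C -> (mstar < size C)%N ->
  exists b, (b.+1 < size C)%N /\ vv (nth [::] C b) = vv (nth [::] C b.+1).
Proof.
case=> v ne Hh Hs hm.
have nu' : ~~ uniq (map vv C).
  rewrite -ltn_size_undup size_map; exact: leq_ltn_trans (size_vv_le ne) hm.
have [i [hi he]] := sorted_nonuniq Hs nu'.
rewrite size_map in hi.
exists i; split => //.
by rewrite -!(nth_map [::] 0) // ltnW.
Qed.

Lemma step_inv C : Inv C -> (mstar < size C)%N ->
  Inv (part_step nu B Y j C) /\ size (part_step nu B Y j C) = (size C).-1.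
Proof.
move=> I hm; have I' := I; case: I' => v ne Hh Hs.
have s2 : (1 < size C)%N by apply: leq_ltn_trans hm; exact: mstar_gt0.
set f := fun b => Qj (hgam nu B Y) Y j (csol (hgam nu B Y) Y j (merge_at b C)).
have n0 : (0 < (size C).-1)%N by rewrite -ltnS prednK // ltnW.
have [bl hmax] := first_argmax_spec f n0.
rewrite /part_step -/f.
set b := first_argmax f (size C).-1.
have hb : (b.+1 < size C)%N by rewrite -(prednK (ltnW s2)) ltnS.
have [b0 [hb0 e0]] := adjacent I hm.
have v0 := validp_merge v hb0.
have ub0 := loss_ub v0 (homog_merge Hh ne hb0 e0).
have f0 : f b0 = (qq (csol (hgam nu B Y) Y j (merge_at b0 C)))%:E by apply: Qj_valid.
have vb := validp_merge v hb.
have fb : f b = (qq (csol (hgam nu B Y) Y j (merge_at b C)))%:E by apply: Qj_valid.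
split; last by rewrite size_merge.
case: (eqVneq (vv (nth [::] C b)) (vv (nth [::] C b.+1))) => e.
  split => //; first exact: nonempty_merge.
    exact: homog_merge.
  exact: sorted_merge.
exfalso.
have lb := loss_lb vb (mixed_merge ne Hh hb e).
have := hmax b0; rewrite -(prednK (ltnW s2)) ltnS in hb0.
move=> /(_ hb0); rewrite f0 fb lee_fin.
have := HC; rewrite /AA /cN; lra.
Qed.

Lemma order_pres a1 b1 : B j a1 <= B j b1 -> Bs j a1 <= Bs j b1.
Proof.
move=> hab; rewrite leNgt; apply/negP => hlt.
have ne : Bs j b1 != Bs j a1 by rewrite lt_eqF.
have := gapH ne; rewrite distrC ger0_norm; last by rewrite subr_ge0 ltW.
have := close j a1; have := close j b1.
have := ler_norm (- (B j a1 - Bs j a1)); have := ler_norm (B j b1 - Bs j b1).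
rewrite normrN => *; have := eps_g; have := gap0; lra.
Qed.

Lemma Inv_init : Inv (part_init B j) /\ size (part_init B j) = K.
Proof.
set le := fun a1 b1 : 'I_K => B j a1 <= B j b1.
have tot : total le by move=> x y; exact: le_total.
rewrite /part_init -/le; split; last by rewrite size_map size_sort size_enum_ord.
split.
- split; rewrite flatten_single ?sort_uniq ?enum_uniq // => k.
  by rewrite mem_sort mem_enum.
- by apply/allP => X /mapP [k _ ->].
- move=> X /mapP [k _ ->] x y; rewrite !inE => /eqP -> /eqP ->; done.
- rewrite -map_comp (eq_map (_ : vv \o (fun k => [:: k]) =1 Bs j)) //.
  rewrite sorted_map; apply: sub_sorted (sort_sorted tot _).
  move=> x y; exact: order_pres.
Qed.

Lemma parts_inv t : (t <= K - mstar)%N ->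
  Inv (parts nu B Y j t) /\ size (parts nu B Y j t) = (K - t)%N.
Proof.
elim: t => [|t IH] ht; first by rewrite subn0; exact: Inv_init.
have [It st] := IH (ltnW ht).
have hm : (mstar < size (parts nu B Y j t))%N.
  by rewrite st ltn_subRL addnC -ltn_subRL.
rewrite /parts iterS -/(parts nu B Y j t).
have [I2 s2] := step_inv It hm.
by split => //; rewrite s2 st subnS.
Qed.

Lemma parts_valid t : (t < K)%N ->
  [/\ validp (parts nu B Y j t), nonempty (parts nu B Y j t) &
      size (parts nu B Y j t) = (K - t)%N].
Proof.
elim: t => [|t IH] ht.
  by have [[v ne _ _] sz] := Inv_init; rewrite subn0.
have [v ne st] := IH (ltnW ht).
rewrite /parts iterS -/(parts nu B Y j t).
set C := parts nu B Y j t in v ne st *.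
have s2 : (1 < size C)%N by rewrite st ltn_subRL addn1.
set f := fun b => Qj (hgam nu B Y) Y j (csol (hgam nu B Y) Y j (merge_at b C)).
have n0 : (0 < (size C).-1)%N by rewrite -ltnS prednK // ltnW.
have [bl _] := first_argmax_spec f n0.
rewrite /part_step -/f.
set b := first_argmax f (size C).-1 in bl *.
have hb : (b.+1 < size C)%N by rewrite -(prednK (ltnW s2)) ltnS.
split.
- exact: validp_merge.
- exact: nonempty_merge.
rewrite size_merge; last exact: hb.
by rewrite st subnS.
Qed.

Definition homogb C :=
  all (fun X => all (fun x => all (fun y => Bs j x == Bs j y) X) X) C.

Lemma homogbP C : homogb C -> homog C.
Proof.
move=> /allP H X XC x y xX yX.
by have /allP /(_ x xX) /allP /(_ y yX) /eqP := H X XC.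
Qed.

Lemma not_homogb C : ~~ homogb C ->
  exists X, [/\ X \in C & exists x y, [/\ x \in X, y \in X & Bs j x != Bs j y]].
Proof.
case/allPn => X XC /allPn [x xX /allPn [y yX ne]].
by exists X; split => //; exists x, y.
Qed.

Definition candq m := cand nu B Y j m.

Lemma cand01 m : (0 < m <= K)%N -> forall k, 0 < candq m k < 1.
Proof.
case/andP=> m0 mK k; rewrite /candq /cand; case: eqP => _; first exact: a01.
have hKm : (K - m < K)%N by rewrite ltn_subrL m0 K0.
have [v _ _] := parts_valid hKm; exact: csol01.
Qed.

Lemma Qj_cand m : (0 < m <= K)%N ->
  Qj (hgam nu B Y) Y j (candq m) = (qq (candq m))%:E.
Proof. by move=> hm; apply: Qj_eq; exact: cand01. Qed.

Lemma cand_ub m : (0 < m <= K)%N -> qq (candq m) <= qq a.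
Proof. by move=> hm; apply: loss_ge0; exact: cand01. Qed.

Lemma AA_ge0 : 0 <= AA.
Proof.
rewrite /AA; apply: mulr_ge0; first by apply: mulr_ge0; rewrite ler0n.
by apply: divr_ge0; [apply: mulr_ge0 => //; exact: sqr_ge0 | exact: ltW].
Qed.

Lemma cand_hi m : (mstar <= m <= K)%N -> qq a - AA <= qq (candq m).
Proof.
case/andP=> hm mK; rewrite /candq /cand; case: eqP => _.
  have -> : qq (B j) = qq a by [].
  by rewrite lerBlDr lerDl; exact: AA_ge0.
have hKm : (K - m <= K - mstar)%N by rewrite leq_sub2l.
have [[v ne Hh _] _] := parts_inv hKm.
have h := loss_ub v Hh; rewrite -/AA in h.
by rewrite lerBlDr -lerBlDl.
Qed.

Lemma cand_lo m : (0 < m)%N -> (m < mstar)%N -> qq (candq m) <= qq a - cN.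
Proof.
move=> m0 hm; have mK : (m < K)%N by apply: leq_trans hm mstar_leK.
rewrite /candq /cand; case: eqP => [e|_]; first by rewrite e ltnn in mK.
have hKm : (K - m < K)%N by rewrite ltn_subrL m0 K0.
have [v ne sz] := parts_valid hKm.
rewrite subKn in sz; last exact: ltnW mK.
case: (boolP (homogb (parts nu B Y j (K - m)))) => Hb.
  have := mstar_le v (homogbP Hb).
  have := size_undup (map vv (parts nu B Y j (K - m))); rewrite size_map sz => h1 h2.
  by have := leq_trans h2 h1; rewrite leqNgt hm.
have h := loss_lb v (not_homogb Hb); rewrite -/cN in h.
by rewrite lerBrDr -lerBrDl.
Qed.

Variable rho : R.
Hypothesis rho1 : 1 <= rho.
Hypothesis HA : 2 * AA < ln (N%:R : R).
Hypothesis HB : K%:R * (ln (N%:R : R) + 2 * ln rho) < 2 * (cN - AA).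

Lemma EBIC_eq m : (0 < m <= K)%N -> EBIC nu B Y j rho m =
  (- (2 * qq (candq m)) + m%:R * (ln (N%:R : R) + 2 * ln rho))%:E.
Proof.
move=> hm; rewrite /EBIC -/(candq m) Qj_cand // -EFinM -EFinN -EFinD.
by congr (_%:E); ring.
Qed.

Lemma lnN_ge0 : 0 <= ln (N%:R : R).
Proof. by apply: ln_ge0; rewrite ler1n. Qed.

Lemma lnrho_ge0 : 0 <= ln rho.
Proof. exact: ln_ge0. Qed.

Lemma mtilde_eq : mtilde nu B Y j rho = mstar.
Proof.
have m0 := mstar_gt0; have mK := mstar_leK.
rewrite /mtilde (@first_argmin_unique _ _ _ mstar.-1); first by rewrite prednK.
  by rewrite prednK // ltnW.
move=> t tK tne; rewrite prednK //.
have hmt : t.+1 != mstar by apply: contra tne => /eqP <-.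
rewrite !EBIC_eq ?m0 ?mK //= lte_fin.
set L := ln (N%:R : R) + 2 * ln rho.
have L0 : ln (N%:R : R) <= L by rewrite /L lerDl; apply: mulr_ge0 => //; exact: lnrho_ge0.
have lN := lnN_ge0.
have hs := cand_hi (_ : (mstar <= mstar <= K)%N); rewrite leqnn mK in hs.
have {}hs := hs isT.
case: (ltngtP t.+1 mstar) => [lt|gt|eq]; last by rewrite eq eqxx in hmt.
- have hl := cand_lo (ltn0Sn t) lt.
  have hK : mstar%:R * L <= K%:R * L by apply: ler_wpM2r; [lra | rewrite ler_nat].
  have hm0 : 0 <= t.+1%:R * L by apply: mulr_ge0; [rewrite ler0n | lra].
  have := HB; rewrite -/L => hB.
  lra.
- have hu := cand_ub (_ : (0 < t.+1 <= K)%N); rewrite ltn0Sn tK in hu.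
  have {}hu := hu isT.
  have hK : mstar%:R * L + L <= t.+1%:R * L.
    rewrite -[X in _ + X]mul1r -mulrDl; apply: ler_wpM2r; first lra.
    by rewrite natr1 ler_nat.
  have := HA; lra.
Qed.

Lemma uniq_C C : validp C -> nonempty C -> uniq C.
Proof. by case=> U _ ne; apply: uniq_blocks. Qed.

Lemma same_block C u w : Inv C -> size C = mstar -> Bs j u = Bs j w ->
  block C u = block C w.
Proof.
case=> v ne Hh Hs sz e; have v' := v; case: v' => U H.
have [bg gb] := block_mem (H u); have [bh hb] := block_mem (H w).
apply/eqP; apply/negPn/negP => neq.
have nuq : ~~ uniq (map vv C).
  apply/negP => uq; move/negP: neq; apply.
  apply/eqP; apply: (uniq_map_eq uq bg bh).
  by rewrite -(vv_mem Hh bg gb) -(vv_mem Hh bh hb).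
have := mstar_le v Hh; rewrite -ltn_size_undup size_map in nuq.
by rewrite -sz leqNgt nuq.
Qed.

Lemma final_eq u w : Bs j u = Bs j w ->
  refined nu B Y j rho u = refined nu B Y j rho w.
Proof.
move=> e; rewrite /refined mtilde_eq /cand.
have mK := mstar_leK.
have hKm : (K - mstar <= K - mstar)%N by [].
have [I sz] := parts_inv hKm; rewrite subKn // in sz.
have bl := same_block I sz e.
case: eqP => [eK|_]; last by rewrite !csol_eq bl.
set C := parts nu B Y j (K - mstar) in I sz bl *.
have CE : C = part_init B j by rewrite /C eK subnn.
have [[U H] _ _ _] := I.
have [bC gb] := block_mem (H u); have [_ hb] := block_mem (H w).
rewrite CE in bC gb hb bl.
have [x ex] : exists x, block (part_init B j) u = [:: x] by case/mapP: bC => x _ ->; exists x.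
move: gb hb; rewrite -bl ex !inE => /eqP -> /eqP -> //.
Qed.

Lemma final_neq u w : Bs j u != Bs j w ->
  refined nu B Y j rho u != refined nu B Y j rho w.
Proof.
move=> ne; rewrite /refined mtilde_eq /cand.
have gp := gapH ne; have eg := eps_g; have g0 := gap0.
have key (p : 'I_K -> R) : `|p u - Bs j u| <= eps -> `|p w - Bs j w| <= eps -> p u != p w.
  move=> h1 h2; apply/negP => /eqP pe.
  have t1 := ler_normD (Bs j u - p u) (p w - Bs j w).
  have e1 : Bs j u - p u + (p w - Bs j w) = Bs j u - Bs j w by rewrite pe; ring.
  rewrite e1 [`|Bs j u - p u|]distrC in t1.
  lra.
have mK := mstar_leK.
have hKm : (K - mstar <= K - mstar)%N by [].
have [I sz] := parts_inv hKm.
have [v _ Hh _] := I.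
case: ifP => _.
  exact: (key (B j) (close j u) (close j w)).
exact: (key _ (csol_close u v Hh) (csol_close w v Hh)).
Qed.

End QA.

Section Aux.
Variable R : realType.

Lemma sq_le_sum (I : finType) (F : I -> R) i : F i ^+ 2 <= \sum_k F k ^+ 2.
Proof.
rewrite (bigD1 i) //= lerDl; apply: sumr_ge0 => k _; exact: sqr_ge0.
Qed.

Lemma vnorm_ge K (v : 'I_K -> R) k : `|v k| <= vnorm v.
Proof.
rewrite /vnorm -sqrtr_sqr ler_sqrt; first exact: sq_le_sum.
by apply: sumr_ge0 => i _; exact: sqr_ge0.
Qed.

Lemma frob_ge J K (A : 'I_J -> 'I_K -> R) j k : `|A j k| <= frob A.
Proof.
rewrite /frob -sqrtr_sqr ler_sqrt; last first.
  by apply: sumr_ge0 => i _; apply: sumr_ge0 => l _; exact: sqr_ge0.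
apply: le_trans (sq_le_sum (fun l => A j l) k) _.
rewrite (bigD1 j) //= lerDl; apply: sumr_ge0 => i _; apply: sumr_ge0 => l _.
exact: sqr_ge0.
Qed.

Lemma vnorm_ge0 K (v : 'I_K -> R) : 0 <= vnorm v.
Proof. exact: sqrtr_ge0. Qed.

Lemma frob_ge0 J K (A : 'I_J -> 'I_K -> R) : 0 <= frob A.
Proof. exact: sqrtr_ge0. Qed.

Lemma ln_le_2sqrt (x : R) : 0 < x -> ln x <= 2 * Num.sqrt x.
Proof.
move=> x0; have s0 : 0 < Num.sqrt x by rewrite sqrtr_gt0.
have -> : x = Num.sqrt x ^+ 2 by rewrite sqr_sqrtr // ltW.
rewrite lnXn // sqrtr_sqr gtr0_norm // mulr2n.
have := ln_le_sub1 s0; lra.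
Qed.

End Aux.

Lemma ev_ger (R : realType) (r : R) : exists N1 : nat, forall n, (N1 <= n)%N -> r <= n%:R.
Proof. by have [N1 _ H] := nbhs_infty_ger r; exists N1 => n hn; apply: H. Qed.

Unset Implicit Arguments.
Section Main.
Variables (R : realType) (J K : nat) (nus : 'I_K -> R) (Bs : 'I_J -> 'I_K -> R)
  (hnu : forall N : nat, data N J -> 'I_K -> R)
  (hB : forall N : nat, data N J -> 'I_J -> 'I_K -> R) (rho : R).
Hypothesis Hsum : \sum_(k < K) nus k = 1.
Hypothesis HMLE : forall (N : nat) (Y : data N J), is_MLE (hnu N Y) (hB N Y) Y.
Hypothesis Hnu : Op_root_N nus Bs (fun N Y => vnorm (fun k => hnu N Y k - nus k)).
Hypothesis HBf : Op_root_N nus Bs (fun N Y => frob (fun j k => hB N Y j k - Bs j k)).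
Hypothesis HBint : forall j k, 0 < Bs j k < 1.
Hypothesis Hnupos : forall k, 0 < nus k.
Hypothesis rho1 : 1 <= rho.
Variable j : 'I_J.

Lemma K0m : (0 < K)%N.
Proof.
rewrite lt0n; apply/negP => /eqP K0m'.
move: Hsum; rewrite big1 => [/eqP|k _]; first by rewrite eq_sym oner_eq0.
by have := ltn_ord k; move: (nat_of_ord k) => m; rewrite K0m'.
Qed.

Lemma nus_le1 k : nus k <= 1.
Proof.
rewrite -Hsum (bigD1 k) //= lerDl; apply: sumr_ge0 => i _; exact: ltW.
Qed.

Definition nu0 := \prod_(k < K) nus k.
Lemma nu0_prop k : 0 < nu0 <= nus k.
Proof.
apply: (prod_small (P := fun _ => true)) => // i _.
by rewrite Hnupos nus_le1.
Qed.
Lemma nu0pos : 0 < nu0.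
Proof. by case/andP: (nu0_prop (Ordinal K0m)). Qed.

Definition delta := \prod_(p : 'I_J * 'I_K) (Bs p.1 p.2 * (1 - Bs p.1 p.2)).
Lemma delta_prop j' k : 0 < delta <= Bs j' k * (1 - Bs j' k).
Proof.
apply: (prod_small (P := fun _ => true) (i0 := (j', k))) => // p _.
have /andP[h1 h2] := HBint p.1 p.2.
apply/andP; split; first by apply: mulr_gt0; lra.
apply: le_trans (_ : Bs p.1 p.2 * 1 <= 1); last by rewrite mulr1 ltW.
by apply: ler_wpM2l; lra.
Qed.
Lemma delta0 : 0 < delta.
Proof. by case/andP: (delta_prop j (Ordinal K0m)). Qed.
Lemma Bs_int j' k : delta <= Bs j' k <= 1 - delta.
Proof.
have /andP[d0 d1] := delta_prop j' k; have /andP[h1 h2] := HBint j' k.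
apply/andP; split.
  by apply: (le_trans d1); apply: ler_piMr; lra.
have : delta <= 1 - Bs j' k.
  by apply: (le_trans d1); rewrite mulrC; apply: ler_piMr; lra.
lra.
Qed.

Definition gap := \prod_(p : 'I_K * 'I_K | Bs j p.1 != Bs j p.2) `|Bs j p.1 - Bs j p.2|.
Lemma gap_fac p : Bs j p.1 != Bs j p.2 -> 0 < `|Bs j p.1 - Bs j p.2| <= 1.
Proof.
move=> ne; rewrite normr_gt0 subr_eq0 ne /=.
have /andP[h1 h2] := HBint j p.1; have /andP[h3 h4] := HBint j p.2.
rewrite ler_norml; apply/andP; split; lra.
Qed.
Lemma gap0 : 0 < gap.
Proof. by apply: prodr_gt0 => p /gap_fac /andP[]. Qed.
Lemma gapH g h : Bs j g != Bs j h -> gap <= `|Bs j g - Bs j h|.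
Proof.
move=> ne; have /andP[_ ->] // := prod_small (P := fun p : 'I_K * 'I_K => Bs j p.1 != Bs j p.2)
  (F := fun p => `|Bs j p.1 - Bs j p.2|) (i0 := (g, h)) gap_fac ne.
Qed.


Lemma nus_ge0 k : 0 <= nus k. Proof. exact: ltW. Qed.
Lemma Bs01 j' k : 0 <= Bs j' k <= 1.
Proof. by have /andP[h1 h2] := HBint j' k; rewrite !ltW. Qed.

Definition goodY (M : R) (N : nat) (Y : data N J) : bool :=
  (Num.sqrt (N%:R : R) * `|vnorm (fun k => hnu N Y k - nus k)| <= M) &&
  (Num.sqrt (N%:R : R) * `|frob (fun j k => hB N Y j k - Bs j k)| <= M).

Lemma key_good e : 0 < e -> exists M : R, 0 <= M /\
  exists N1, forall N, (N1 <= N)%N -> 1 - e < prob nus Bs (goodY M N).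
Proof.
move=> e0; have e2 : 0 < e / 2 by rewrite divr_gt0.
have [M1 [N1 H1]] := Hnu _ e2; have [M2 [N2 H2]] := HBf _ e2.
set M := Num.max (Num.max M1 M2) 0.
have hM1 : M1 <= M by rewrite /M !le_max lexx.
have hM2 : M2 <= M by rewrite /M !le_max lexx orbT.
exists M; split; first by rewrite /M le_max lexx orbT.
exists (maxn N1 N2) => N hN.
have p1 := H1 N (leq_trans (leq_maxl _ _) hN).
have p2 := H2 N (leq_trans (leq_maxr _ _) hN).
have hc := prob_compl Bs Hsum (goodY M N).
have hu := prob_union nus_ge0 Bs01
  (fun Y : data N J => M1 < Num.sqrt (N%:R : R) * `|vnorm (fun k => hnu N Y k - nus k)|)
  (fun Y : data N J => M2 < Num.sqrt (N%:R : R) * `|frob (fun j k => hB N Y j k - Bs j k)|).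
have hl : prob nus Bs (fun Y => ~~ goodY M N Y) <=
   prob nus Bs (fun Y : data N J =>
     (M1 < Num.sqrt (N%:R : R) * `|vnorm (fun k => hnu N Y k - nus k)|) ||
     (M2 < Num.sqrt (N%:R : R) * `|frob (fun j k => hB N Y j k - Bs j k)|)).
  apply: (prob_le nus_ge0 Bs01) => Y; rewrite /goodY negb_and -!ltNge.
  case/orP => h; [apply/orP; left | apply/orP; right]; exact: le_lt_trans h.
lra.
Qed.

Lemma sq_le (N : nat) (X : R) : 0 <= X -> X ^+ 2 <= N%:R -> X <= Num.sqrt (N%:R : R).
Proof.
move=> X0 h; rewrite -(ger0_norm X0) -sqrtr_sqr ler_sqrt //; exact: ler0n.
Qed.

Lemma det (M : R) : 0 <= M -> exists N1, forall N, (N1 <= N)%N ->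
  forall Y : data N J, goodY M N Y ->
  [/\ mtilde (hnu N Y) (hB N Y) Y j rho == card_distinct (Bs j),
      (forall g h, Bs j g = Bs j h ->
         refined (hnu N Y) (hB N Y) Y j rho g == refined (hnu N Y) (hB N Y) Y j rho h) &
      (forall g h, Bs j g != Bs j h ->
         refined (hnu N Y) (hB N Y) Y j rho g != refined (hnu N Y) (hB N Y) Y j rho h)].
Proof.
move=> M0.
have n0 := nu0pos; have d0 := delta0; have g0 := gap0.
have nu2 : 0 < nu0 / 2 by rewrite divr_gt0.
set c1 := c0 J (nu0 / 2) delta * (gap ^+ 2 / 64).
have c1pos : 0 < c1.
  rewrite /c1 /c0; apply: mulr_gt0; last by apply: divr_gt0 => //; rewrite exprn_gt0.
  by apply: mulr_gt0 => //; apply: exprn_gt0; rewrite divr_gt0.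
set A0 := K%:R * (16 * M ^+ 2 / delta).
have A00 : 0 <= A0.
  rewrite /A0; apply: mulr_ge0; first exact: ler0n.
  by apply: divr_ge0; [apply: mulr_ge0 => //; exact: sqr_ge0 | exact: ltW].
have lr0 : 0 <= ln rho by apply: ln_ge0.
set T := K%:R * ln rho + A0 + c1.
have T0 : 0 <= T by rewrite /T; have := ler0n R K; move=> k0; have := mulr_ge0 k0 lr0; lra.
set S := (K%:R + T) / c1.
have S0 : 0 <= S by rewrite /S; apply: divr_ge0; [have := ler0n R K; lra | exact: ltW].
have [N1 H1] := ev_ger (1 : R).
have [N2 H2] := ev_ger ((M / (nu0 / 2)) ^+ 2).
have [N3 H3] := ev_ger ((M / (delta / 2)) ^+ 2).
have [N4 H4] := ev_ger ((M / (gap / 4)) ^+ 2).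
have [N5 H5] := ev_ger (A0 / c1 + 1).
have [N6 H6] := ev_ger (expR (2 * A0 + 1)).
have [N7 H7] := ev_ger ((S + 1) ^+ 2).
exists (maxn N1 (maxn N2 (maxn N3 (maxn N4 (maxn N5 (maxn N6 N7)))))) => N hN Y /andP[gY1 gY2].
rewrite !geq_max in hN.
case/and5P: hN => hN1 hN2 hN3 hN4 /and3P[hN5 hN6 hN7].
have {H1}h1 := H1 N hN1; have {H2}h2 := H2 N hN2; have {H3}h3 := H3 N hN3.
have {H4}h4 := H4 N hN4; have {H5}h5 := H5 N hN5; have {H6}h6 := H6 N hN6.
have {H7}h7 := H7 N hN7.
have N0 : (0 < N)%N by rewrite -(ler1n R).
have Npos : 0 < (N%:R : R) by rewrite ltr0n.
set sN := Num.sqrt (N%:R : R).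
have sN0 : 0 < sN by rewrite sqrtr_gt0.
have sNsq : sN * sN = N%:R by rewrite -expr2 sqr_sqrtr // ltW.
set eps := M / sN.
have eps0 : 0 <= eps by apply: divr_ge0 => //; exact: ltW.
have hdiv (c : R) : 0 < c -> (M / c) ^+ 2 <= N%:R -> eps <= c.
  move=> c0' h; have := sq_le N _ (divr_ge0 M0 (ltW c0')) h; rewrite -/sN.
  by rewrite /eps ler_pdivrMr // ler_pdivrMr // mulrC.
have e1 := hdiv _ nu2 h2.
have e2 : eps <= delta / 2 by apply: hdiv => //; rewrite divr_gt0.
have e3 : 4 * eps <= gap.
  have : eps <= gap / 4 by apply: hdiv => //; rewrite divr_gt0.
  lra.
have vb : vnorm (fun k => hnu N Y k - nus k) <= eps.
  rewrite /eps ler_pdivlMr // mulrC -[X in _ * X]ger0_norm //; exact: vnorm_ge0.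
have fb : frob (fun j k => hB N Y j k - Bs j k) <= eps.
  rewrite /eps ler_pdivlMr // mulrC -[X in _ * X]ger0_norm //; exact: frob_ge0.
have close j' k : `|hB N Y j' k - Bs j' k| <= eps.
  exact: le_trans (frob_ge (fun j k => hB N Y j k - Bs j k) j' k) fb.
have nulb k : nu0 / 2 <= hnu N Y k.
  have := le_trans (vnorm_ge (fun k => hnu N Y k - nus k) k) vb.
  have /andP[_ hk] := nu0_prop k.
  move=> h; have := ler_norm (- (hnu N Y k - nus k)); rewrite normrN; lra.
have AAeq : AA N K eps delta = A0.
  rewrite /AA /A0 /eps expr_div_n [sN ^+ 2]expr2 sNsq; field.
  have Nne : (N%:R : R) != 0 by rewrite gt_eqF.
  have dne : delta != 0 by rewrite gt_eqF.
  by rewrite ?Nne ?dne.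
have cNeq : cN N J (nu0 / 2) delta gap = N%:R * c1 by rewrite /cN /c1; ring.
have HC : AA N K eps delta < cN N J (nu0 / 2) delta gap.
  rewrite AAeq cNeq.
  have : (A0 / c1 + 1) * c1 <= N%:R * c1 by rewrite ler_pM2r.
  have -> : (A0 / c1 + 1) * c1 = A0 + c1 by field; rewrite gt_eqF.
  lra.
have HA : 2 * AA N K eps delta < ln (N%:R : R).
  rewrite AAeq; have := ler_ln (expR_gt0 (2 * A0 + 1)) Npos.
  rewrite h6 expRK => h; lra.
have HB : K%:R * (ln (N%:R : R) + 2 * ln rho) <
    2 * (cN N J (nu0 / 2) delta gap - AA N K eps delta).
  rewrite AAeq cNeq.
  have l1 := ln_le_2sqrt Npos; rewrite -/sN in l1.
  have sS : S + 1 <= sN by apply: sq_le => //; lra.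
  have a1 : K%:R + T <= c1 * sN.
    have -> : K%:R + T = c1 * S by rewrite /S; field; rewrite gt_eqF.
    by rewrite ler_pM2l //; lra.
  have a2 : (K%:R + T) * sN <= c1 * sN * sN by rewrite ler_pM2r.
  have a3 : T <= T * sN by rewrite ler_peMr //; lra.
  have a4 : K%:R * ln (N%:R : R) <= 2 * (K%:R * sN).
    rewrite mulrCA; apply: ler_wpM2l; [exact: ler0n | lra].
  have a5 : N%:R * c1 = c1 * sN * sN by rewrite -sNsq; ring.
  have a6 : (K%:R + T) * sN = K%:R * sN + T * sN by ring.
  have a7 : K%:R * (ln (N%:R : R) + 2 * ln rho) = K%:R * ln (N%:R : R) + 2 * (K%:R * ln rho) by ring.
  rewrite a7 a5; move: a2; rewrite a6 => a2.
  have := c1pos; rewrite /T in a3 a2 T0 *; lra.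
have HM := HMLE N Y.
have K0m' := K0m.
split.
- by rewrite (mtilde_eq HM nu2 nulb d0 Bs_int close e2 g0 (@gapH) e3 N0 K0m' HC rho1 HA HB).
- move=> g h e; apply/eqP.
  exact: (final_eq HM nu2 nulb d0 Bs_int close e2 g0 (@gapH) e3 N0 K0m' HC rho1 HA HB e).
- move=> g h e.
  exact: (final_neq HM nu2 nulb d0 Bs_int close e2 g0 (@gapH) e3 N0 K0m' HC rho1 HA HB e).
Qed.

Lemma conv_from (p : nat -> R) : (forall N, p N <= 1) ->
  (forall e, 0 < e -> exists N1, forall N, (N1 <= N)%N -> 1 - e < p N) ->
  p @ \oo --> (1 : R).
Proof.
move=> p1 H; apply/cvgrPdist_lt => e e0.
have [N1 HN] := H e e0.
exists N1 => // N /= hN.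
rewrite ger0_norm; last by rewrite subr_ge0.
have := HN N hN; lra.
Qed.

Lemma main_all : [/\ (fun N : nat =>
           prob nus Bs (fun Y : data N J =>
             mtilde (hnu N Y) (hB N Y) Y j rho == card_distinct (Bs j)))
          @ \oo --> (1 : R),
        (forall g h : 'I_K, Bs j g = Bs j h ->
           (fun N : nat =>
              prob nus Bs (fun Y : data N J =>
                refined (hnu N Y) (hB N Y) Y j rho g ==
                refined (hnu N Y) (hB N Y) Y j rho h))
             @ \oo --> (1 : R)) &
        (forall g h : 'I_K, Bs j g != Bs j h ->
           (fun N : nat =>
              prob nus Bs (fun Y : data N J =>
                refined (hnu N Y) (hB N Y) Y j rho g !=
                refined (hnu N Y) (hB N Y) Y j rho h))
             @ \oo --> (1 : R))].
Proof.
have gen (E : forall N, pred (data N J)) :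
    (forall M, 0 <= M -> exists N1, forall N, (N1 <= N)%N ->
       forall Y, goodY M N Y -> E N Y) ->
    (fun N => prob nus Bs (E N)) @ \oo --> (1 : R).
  move=> HE; apply: conv_from => [N|e e0]; first exact: prob_le1 nus_ge0 Hsum Bs01 _.
  have [M [M0 [N1 HN1]]] := key_good e e0.
  have [N2 HN2] := HE M M0.
  exists (maxn N1 N2) => N hN.
  apply: lt_le_trans (HN1 N (leq_trans (leq_maxl _ _) hN)) _.
  apply: (prob_le nus_ge0 Bs01) => Y; exact: HN2 N (leq_trans (leq_maxr _ _) hN) Y.
split.
- apply: (gen (fun N Y => mtilde (hnu N Y) (hB N Y) Y j rho == card_distinct (Bs j))).
  move=> M M0; have [N1 H] := det M M0; exists N1 => N hN Y gY.
  by have [] := H N hN Y gY.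
- move=> g h e.
  apply: (gen (fun N Y => refined (hnu N Y) (hB N Y) Y j rho g ==
                refined (hnu N Y) (hB N Y) Y j rho h)).
  move=> M M0; have [N1 H] := det M M0; exists N1 => N hN Y gY.
  by have [_ H2 _] := H N hN Y gY; apply: H2.
- move=> g h e.
  apply: (gen (fun N Y => refined (hnu N Y) (hB N Y) Y j rho g !=
                refined (hnu N Y) (hB N Y) Y j rho h)).
  move=> M M0; have [N1 H] := det M M0; exists N1 => N hN Y gY.
  by have [_ _ H3] := H N hN Y gY; apply: H3.
Qed.

End Main.

Theorem theorem1 (R : realType) (J K : nat)
  (nus : 'I_K -> R) (Bs : 'I_J -> 'I_K -> R)
  (hnu : forall N : nat, data N J -> 'I_K -> R)
  (hB : forall N : nat, data N J -> 'I_J -> 'I_K -> R)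
  (rho : R) :
  \sum_(k < K) nus k = 1 ->
  (forall (N : nat) (Y : data N J), is_MLE (hnu N Y) (hB N Y) Y) ->
  (* (A1) *)
  Op_root_N nus Bs (fun N Y => vnorm (fun k => hnu N Y k - nus k)) ->
  Op_root_N nus Bs (fun N Y => frob (fun j k => hB N Y j k - Bs j k)) ->
  (* (A2) *)
  (forall j k, 0 < Bs j k < 1) ->
  (forall k, 0 < nus k) ->
  (* (A3) *)
  1 <= rho ->
  forall j : 'I_J,
    [/\ (fun N : nat =>
           prob nus Bs (fun Y : data N J =>
             mtilde (hnu N Y) (hB N Y) Y j rho == card_distinct (Bs j)))
          @ \oo --> (1 : R),
        (forall g h : 'I_K, Bs j g = Bs j h ->
           (fun N : nat =>
              prob nus Bs (fun Y : data N J =>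
                refined (hnu N Y) (hB N Y) Y j rho g ==
                refined (hnu N Y) (hB N Y) Y j rho h))
             @ \oo --> (1 : R)) &
        (forall g h : 'I_K, Bs j g != Bs j h ->
           (fun N : nat =>
              prob nus Bs (fun Y : data N J =>
                refined (hnu N Y) (hB N Y) Y j rho g !=
                refined (hnu N Y) (hB N Y) Y j rho h))
             @ \oo --> (1 : R))].
Proof.
move=> Hsum HMLE Hnu HBf HBint Hnupos rho1 j.
by apply: main_all.
Qed.
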